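(* Let $0<\epsilon\le\beta<\tfrac12$ and $b>0$. Let $\widehat Q_2$ be the estimator $$\widehat Q_2=\frac1n\sum_{i=1}^n\big[(X_i^2-\sigma^2\tau_n)_+-\mu_0\big]\big[(Y_i^2-\sigma^2\tau_n)_+-\theta_0\big],\qquad \mu_0=\theta_0:=E_0(Y_i^2-\sigma^2\tau_n)_+,$$ with threshold $\tau_n=\log n$, where $E_0$ denotes expectation when $Y_i\sim N(0,\sigma^2)$. Then there is a constant $C>0$ (depending only on $\beta,\epsilon,b,\sigma$) such that for all sufficiently large $n$, $$\sup_{(\mu,\theta)\in\Omega(\beta,\epsilon,b)}E_{(\mu,\theta)}\big(\widehat Q_2-Q(\mu,\theta)\big)^2\le C\Big[n^{2\epsilon+4b-2}(\log n)^2+n^{\epsilon+6b-2}\Big].$$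
   Context: Gaussian two-sequence model: one observes $X_i=\mu_i+\sigma z_i'$, $Y_i=\theta_i+\sigma z_i$, $i=1,\dots,n$, where $z_1',\dots,z_n',z_1,\dots,z_n$ are i.i.d. $N(0,1)$ and the noise level $\sigma>0$ is known. The target functional is $Q(\mu,\theta)=\frac1n\sum_{i=1}^n\mu_i^2\theta_i^2$. For $x\in\mathbb R$, $x_+=\max\{x,0\}$. For vectors, $\|\mu\|_0$ is the number of nonzero entries, $\|\mu\|_\infty=\max_i|\mu_i|$, and $\mu\star\theta=(\mu_1\theta_1,\dots,\mu_n\theta_n)$. With $k_n=n^\beta$, $q_n=n^\epsilon$, $s_n=n^b$ (where $0<\epsilon\le\beta<\tfrac12$, $b\in\mathbb R$), the parameter space is $$\Omega(\beta,\epsilon,b)=\{(\mu,\theta)\in\mathbb R^n\times\mathbb R^n:\|\mu\|_0\le k_n,\|\mu\|_\infty\le s_n,\|\theta\|_0\le k_n,\|\theta\|_\infty\le s_n,\|\mu\star\theta\|_0\le q_n\}.$$ *)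

(* Defs.v *)
From Stdlib Require Import Reals Lra List.
Import ListNotations.
Open Scope R_scope.

Definition pos_part (x : R) : R := Rmax x 0.

Definition rsum (n : nat) (f : nat -> R) : R :=
  fold_right Rplus 0 (map f (seq 0 n)).

Definition nnz (n : nat) (v : nat -> R) : nat :=
  length (filter (fun i => if Req_EM_T (v i) 0 then false else true) (seq 0 n)).

Definition phi (z : R) : R := exp (- (z * z) / 2) / sqrt (2 * PI).

Definition improper_int (f : R -> R) (L : R) : Prop :=
  forall eps, 0 < eps -> exists A, forall a b, a <= - A -> A <= b ->
    exists pr : Riemann_integrable f a b, Rabs (RiemannInt pr - L) < eps.

Definition upd (z : nat -> R) (k : nat) (t : R) : nat -> R :=
  fun i => if Nat.eqb i k then t else z i.

(* gauss_exp m F L : E[F(z)] = L where z_0, ..., z_{m-1} are i.i.d. N(0,1)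
   (coordinates >= m are set to 0), computed as an iterated improper
   Riemann integral against the standard normal density. *)
Fixpoint gauss_exp (m : nat) (F : (nat -> R) -> R) (L : R) : Prop :=
  match m with
  | O => L = F (fun _ => 0)
  | S m' => exists g : R -> R,
      (forall t, gauss_exp m' (fun z => F (upd z m' t)) (g t)) /\
      improper_int (fun t => phi t * g t) L
  end.

(* Parameter space Omega(beta, eps, b) with k_n = n^beta, q_n = n^eps, s_n = n^b *)
Definition Omega (n : nat) (beta eps b : R) (mu theta : nat -> R) : Prop :=
  INR (nnz n mu) <= Rpower (INR n) beta /\
  (forall i, (i < n)%nat -> Rabs (mu i) <= Rpower (INR n) b) /\
  INR (nnz n theta) <= Rpower (INR n) beta /\
  (forall i, (i < n)%nat -> Rabs (theta i) <= Rpower (INR n) b) /\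
  INR (nnz n (fun i => mu i * theta i)) <= Rpower (INR n) eps.

Definition Qfun (n : nat) (mu theta : nat -> R) : R :=
  / INR n * rsum n (fun i => mu i ^ 2 * theta i ^ 2).

Definition tau (n : nat) : R := ln (INR n).

Definition Qhat2 (n : nat) (sigma mu0 theta0 : R) (X Y : nat -> R) : R :=
  / INR n * rsum n (fun i =>
    (pos_part (X i ^ 2 - sigma ^ 2 * tau n) - mu0) *
    (pos_part (Y i ^ 2 - sigma ^ 2 * tau n) - theta0)).

(* Observations from the noise vector z : X_i = mu_i + sigma z'_i with
   z'_i = z_i, and Y_i = theta_i + sigma z_i with z_i = z_(n+i). *)
Definition obsX (n : nat) (sigma : R) (mu : nat -> R) (z : nat -> R) : nat -> R :=
  fun i => mu i + sigma * z i.
Definition obsY (n : nat) (sigma : R) (theta : nat -> R) (z : nat -> R) : nat -> R :=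
  fun i => theta i + sigma * z (n + i)%nat.

(* Main.v *)
Require Import Defs.
From Stdlib Require Import Reals Lra Lia List ClassicalEpsilon.
From Coquelicot Require Import Coquelicot.
Open Scope R_scope.

Definition gf (t:R) := exp (-(t*t)).
Definition G (x:R) : R := RInt gf 0 x.
Definition hu (x u : R) := exp (-(x*x) * (1+u*u)) / (1+u*u).
Definition Hq (x:R) : R := RInt (hu x) 0 1.

Lemma dcont (f : R -> R) x : ex_derive f x -> continuous f x.
Proof. apply (ex_derive_continuous (K:=R_AbsRing) (V:=R_NormedModule)). Qed.

Lemma exc (f : R -> R) a b : (forall z, continuous f z) -> ex_RInt f a b.
Proof. intro H. apply (ex_RInt_continuous (V:=R_CompleteNormedModule)). intros; apply H. Qed.

Lemma rint_correct (f : R -> R) a b : ex_RInt f a b -> is_RInt f a b (RInt f a b).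
Proof. apply (RInt_correct (V:=R_CompleteNormedModule)). Qed.

Ltac toR := lazymatch goal with |- ?a = ?b => change (@eq R a b) end.

Lemma gf_cont t : continuous gf t.
Proof. apply dcont. unfold gf. auto_derive. auto. Qed.

Lemma ex_gf a b : ex_RInt gf a b.
Proof. apply exc; apply gf_cont. Qed.

Lemma G_deriv x : is_derive G x (gf x).
Proof.
  apply (is_derive_RInt gf G 0).
  - apply filter_forall; intro y. apply rint_correct. apply ex_gf.
  - apply gf_cont.
Qed.

Lemma plus_sq_pos u : 0 < 1 + u*u.
Proof. nra. Qed.

Lemma hu_cont x u : continuous (hu x) u.
Proof. apply dcont. unfold hu. auto_derive. pose proof (plus_sq_pos u); lra. Qed.

Lemma Derive_hu u v : Derive (fun z => hu z v) u = -2 * u * exp (-(u*u)*(1+v*v)).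
Proof.
  apply is_derive_unique. unfold hu. auto_derive.
  - pose proof (plus_sq_pos v); lra.
  - pose proof (plus_sq_pos v); field; lra.
Qed.

Lemma ex_hu x a b : ex_RInt (hu x) a b.
Proof. apply exc; apply hu_cont. Qed.

Lemma H_deriv x : is_derive Hq x (-2 * gf x * G x).
Proof.
  assert (D := is_derive_RInt_param hu 0 1 x).
  unfold Hq.
  replace (-2 * gf x * G x) with (RInt (fun t => Derive (fun u => hu u t) x) 0 1).
  - apply D.
    + apply filter_forall; intros y t _. unfold hu. auto_derive. pose proof (plus_sq_pos t); lra.
    + intros t _. apply continuity_2d_pt_ext with (f := fun u v => -2 * u * exp (-(u*u)*(1+v*v))).
      * intros; rewrite Derive_hu; reflexivity.
      * apply continuity_2d_pt_mult.
        -- apply continuity_2d_pt_mult. apply continuity_2d_pt_const. apply continuity_2d_pt_id1.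
        -- apply continuity_1d_2d_pt_comp with (f := exp) (g := fun u v => -(u*u)*(1+v*v)).
           ++ apply derivable_continuous_pt. apply derivable_pt_exp.
           ++ apply continuity_2d_pt_mult.
              ** apply continuity_2d_pt_opp. apply continuity_2d_pt_mult; apply continuity_2d_pt_id1.
              ** apply continuity_2d_pt_plus. apply continuity_2d_pt_const.
                 apply continuity_2d_pt_mult; apply continuity_2d_pt_id2.
    + apply filter_forall; intro y. apply ex_hu.
  - rewrite (RInt_ext _ (fun t => (-2 * gf x) * (x * gf (x * t + 0)))).
    2:{ intros t _. rewrite Derive_hu. unfold gf. rewrite Rplus_0_r.
        replace (-(x*x)*(1+t*t)) with (-(x*x) + - (x*t*(x*t))) by ring.
        rewrite exp_plus. toR. ring. }
    rewrite (RInt_scal (V:=R_CompleteNormedModule)).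
    2:{ apply exc; intro z. apply dcont. unfold gf; auto_derive; auto. }
    unfold scal; simpl; unfold mult; simpl. toR.
    assert (E := RInt_comp_lin (V:=R_CompleteNormedModule) gf x 0 0 1).
    unfold scal in E; simpl in E; unfold mult in E; simpl in E.
    rewrite E. unfold G. f_equal; f_equal; toR; ring. apply ex_gf.
Qed.

Lemma deriv0_const (f : R -> R) : (forall x, is_derive f x 0) -> forall x y, f x = f y.
Proof.
  intros Hd.
  set (pr := fun x => exist (fun l => derivable_pt_lim f x l) 0 (proj1 (is_derive_Reals f x 0) (Hd x))
    : derivable_pt f x).
  assert (C := null_derivative_1 f pr (fun x => eq_refl)).
  intros x y; apply C.
Qed.

Lemma GH_const x : G x * G x + Hq x = G 0 * G 0 + Hq 0.
Proof.
  apply (deriv0_const (fun x => G x * G x + Hq x)). intro y.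
  replace 0 with (plus (gf y * G y + G y * gf y) (-2 * gf y * G y)).
  2:{ unfold plus; simpl. ring. }
  apply (is_derive_plus (K:=R_AbsRing) (V:=R_NormedModule)).
  - replace (gf y * G y + G y * gf y) with (plus (scal (gf y) (G y)) (scal (G y) (gf y))).
    2:{ unfold plus, scal; simpl; unfold mult; simpl. ring. }
    apply (is_derive_mult G G). apply G_deriv. apply G_deriv.
    intros; unfold mult; simpl; ring.
  - apply H_deriv.
Qed.

Lemma G0 : G 0 = 0.
Proof. unfold G. apply (RInt_point (V:=R_CompleteNormedModule)). Qed.

Lemma Hq0 : Hq 0 = PI / 4.
Proof.
  unfold Hq. rewrite <- atan_1.
  replace (atan 1) with (minus (atan 1) (atan 0)).
  2:{ rewrite atan_0. unfold minus, plus, opp; simpl. ring. }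
  apply (is_RInt_unique (V:=R_CompleteNormedModule)).
  apply (is_RInt_derive (V:=R_CompleteNormedModule)).
  - intros x _. apply is_derive_Reals.
    replace (hu 0 x) with (/ (1 + x^2)). apply derivable_pt_lim_atan.
    unfold hu. replace (-(0*0)*(1+x*x)) with 0 by ring. rewrite exp_0.
    pose proof (plus_sq_pos x). field. nra.
  - intros; apply hu_cont.
Qed.

Lemma GH x : G x * G x + Hq x = PI / 4.
Proof. rewrite GH_const, G0, Hq0. ring. Qed.

Lemma H_bounds x : 0 <= Hq x <= gf x.
Proof.
  unfold Hq; split.
  - apply RInt_ge_0. lra. apply ex_hu. intros u _. unfold hu.
    pose proof (plus_sq_pos u). pose proof (exp_pos (-(x*x)*(1+u*u))).
    apply Rlt_le, Rdiv_lt_0_compat; lra.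
  - apply Rle_trans with (RInt (fun _ => gf x) 0 1).
    + apply RInt_le. lra. apply ex_hu. apply exc; intro; apply dcont; auto_derive; auto.
      intros u Hu. unfold hu, gf. pose proof (plus_sq_pos u).
      assert (exp (-(x*x)*(1+u*u)) <= exp (-(x*x))).
      { destruct (Req_dec (x*x*(u*u)) 0) as [E|E].
        - replace (-(x*x)*(1+u*u)) with (-(x*x)) by nra. lra.
        - apply Rlt_le, exp_increasing. nra. }
      pose proof (exp_pos (-(x*x)*(1+u*u))).
      unfold Rdiv. apply Rle_trans with (exp (- (x * x) * (1 + u * u)) * 1).
      apply Rmult_le_compat_l. lra. rewrite <- Rinv_1. apply Rinv_le_contravar; nra. lra.
    + rewrite (RInt_const (V:=R_CompleteNormedModule)). unfold scal; simpl; unfold mult; simpl. lra.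
Qed.

Lemma G_nonneg x : 0 <= x -> 0 <= G x.
Proof.
  intros Hx. unfold G. apply RInt_ge_0; auto. apply ex_gf. intros; unfold gf.
  apply Rlt_le, exp_pos.
Qed.

Lemma G_close y : 0 <= y -> Rabs (G y - sqrt PI / 2) <= 2 * gf y / sqrt PI.
Proof.
  intros Hy. pose proof (GH y). pose proof (H_bounds y). pose proof (G_nonneg y Hy).
  pose proof PI_RGT_0. assert (sp : 0 < sqrt PI) by (apply sqrt_lt_R0; lra).
  assert (sq : sqrt PI * sqrt PI = PI) by (apply sqrt_sqrt; lra).
  assert (E : (sqrt PI / 2 - G y) * (sqrt PI / 2 + G y) = Hq y) by nra.
  assert (0 <= sqrt PI / 2 - G y) by nra.
  rewrite Rabs_minus_sym, Rabs_right by lra.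
  apply Rle_trans with (Hq y / (sqrt PI / 2)).
  - apply Rmult_le_reg_r with (sqrt PI / 2). lra. replace (Hq y / (sqrt PI / 2) * (sqrt PI / 2)) with (Hq y) by (field; lra). nra.
  - replace (2 * gf y / sqrt PI) with (gf y / (sqrt PI / 2)) by (field; lra).
    unfold Rdiv. apply Rmult_le_compat_r. apply Rlt_le, Rinv_0_lt_compat; lra. lra.
Qed.

Definition phi0 (z : R) : R := exp (- (z * z) / 2) / sqrt (2 * PI).

Lemma phi0_cont t : continuous phi0 t.
Proof. apply dcont. unfold phi0. auto_derive. pose proof PI_RGT_0. assert (0 < sqrt (2*PI)) by (apply sqrt_lt_R0; lra). lra. Qed.

Lemma RInt_phi0_0 b : RInt phi0 0 b = G (b / sqrt 2) / sqrt PI.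
Proof.
  pose proof PI_RGT_0. assert (sp : 0 < sqrt PI) by (apply sqrt_lt_R0; lra).
  assert (s2 : 0 < sqrt 2) by (apply sqrt_lt_R0; lra).
  assert (sq2 : sqrt 2 * sqrt 2 = 2) by (apply sqrt_sqrt; lra).
  assert (E := RInt_comp_lin (V:=R_CompleteNormedModule) gf (/ sqrt 2) 0 0 b).
  unfold scal in E; simpl in E; unfold mult in E; simpl in E.
  rewrite (RInt_ext (V:=R_CompleteNormedModule) phi0 (fun t => (/ sqrt PI) * (/ sqrt 2 * gf (/ sqrt 2 * t + 0)))).
  - rewrite (RInt_scal (V:=R_CompleteNormedModule)). unfold scal; simpl; unfold mult; simpl.
    rewrite E. unfold G. toR. replace (/ sqrt 2 * 0 + 0) with 0 by ring.
    replace (/ sqrt 2 * b + 0) with (b / sqrt 2) by (field; lra). field. lra. apply ex_gf.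
    apply exc; intro z; apply dcont; unfold gf; auto_derive; auto.
  - intros t _. unfold phi0, gf. rewrite sqrt_mult by lra. toR.
    replace (- ((/ sqrt 2 * t + 0) * (/ sqrt 2 * t + 0))) with (- (t*t) / 2).
    field. lra. replace ((/ sqrt 2 * t + 0) * (/ sqrt 2 * t + 0)) with ((t*t) / (sqrt 2 * sqrt 2)) by (field; lra).
    rewrite sq2. field.
Qed.

Definition IMP (f : R -> R) (L : R) : Prop :=
  forall eps, 0 < eps -> exists A, forall a b, a <= -A -> A <= b ->
    ex_RInt f a b /\ Rabs (RInt f a b - L) < eps.

Lemma IMP_unique f L1 L2 : IMP f L1 -> IMP f L2 -> L1 = L2.
Proof.
  intros H1 H2. destruct (Req_dec L1 L2) as [|Hn]; auto. exfalso.
  assert (e : 0 < Rabs (L1 - L2) / 2). { assert (L1 - L2 <> 0) by lra. apply Rabs_pos_lt in H. lra. }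
  destruct (H1 _ e) as [A1 HA1]. destruct (H2 _ e) as [A2 HA2].
  set (A := Rmax (Rabs A1) (Rabs A2)).
  assert (a1 : Rabs A1 <= A) by apply Rmax_l. assert (a2 : Rabs A2 <= A) by apply Rmax_r.
  pose proof (Rle_abs A1). pose proof (Rle_abs A2).
  pose proof (Rabs_pos A1). pose proof (Rabs_pos A2).
  destruct (HA1 (-A) A) as [_ h1]; try lra. destruct (HA2 (-A) A) as [_ h2]; try lra.
  assert (Rabs (L1 - L2) <= Rabs (RInt f (-A) A - L1) + Rabs (RInt f (-A) A - L2)).
  { replace (L1 - L2) with (- (RInt f (-A) A - L1) + (RInt f (-A) A - L2)) by ring.
    eapply Rle_trans. apply Rabs_triang. rewrite Rabs_Ropp. lra. }
  lra.
Qed.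

Lemma IMP_ext f g L : (forall x, f x = g x) -> IMP f L -> IMP g L.
Proof.
  intros E H eps He. destruct (H eps He) as [A HA]. exists A. intros a b Ha Hb.
  destruct (HA a b Ha Hb) as [h1 h2]. split.
  - apply ex_RInt_ext with f. intros; apply E. auto.
  - rewrite (RInt_ext (V:=R_CompleteNormedModule) g f). auto. intros; rewrite E; auto.
Qed.

Lemma IMP_plus f g L1 L2 : IMP f L1 -> IMP g L2 -> IMP (fun x => f x + g x) (L1 + L2).
Proof.
  intros H1 H2 eps He. destruct (H1 (eps/2)) as [A1 HA1]. lra. destruct (H2 (eps/2)) as [A2 HA2]. lra.
  exists (Rmax A1 A2). intros a b Ha Hb.
  pose proof (Rmax_l A1 A2). pose proof (Rmax_r A1 A2).
  destruct (HA1 a b) as [e1 r1]; try lra. destruct (HA2 a b) as [e2 r2]; try lra.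
  split.
  - apply (ex_RInt_plus (V:=R_NormedModule) f g); auto.
  - rewrite (RInt_plus (V:=R_CompleteNormedModule) f g) by auto. unfold plus; simpl.
    replace (RInt f a b + RInt g a b - (L1 + L2)) with ((RInt f a b - L1) + (RInt g a b - L2)) by ring.
    eapply Rle_lt_trans. apply Rabs_triang. lra.
Qed.

Lemma IMP_scal f c L : IMP f L -> IMP (fun x => c * f x) (c * L).
Proof.
  intros H eps He. destruct (H (eps / (Rabs c + 1))) as [A HA].
  { apply Rdiv_lt_0_compat. lra. pose proof (Rabs_pos c); lra. }
  exists A. intros a b Ha Hb. destruct (HA a b Ha Hb) as [e r]. split.
  - apply (ex_RInt_scal (V:=R_NormedModule) f); auto.
  - rewrite (RInt_scal (V:=R_CompleteNormedModule) f) by auto. unfold scal; simpl; unfold mult; simpl.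
    replace (c * RInt f a b - c * L) with (c * (RInt f a b - L)) by ring.
    rewrite Rabs_mult. pose proof (Rabs_pos c). pose proof (Rabs_pos (RInt f a b - L)).
    apply Rle_lt_trans with ((Rabs c + 1) * Rabs (RInt f a b - L)). nra.
    apply Rmult_lt_reg_l with (/ (Rabs c + 1)). apply Rinv_0_lt_compat; lra.
    rewrite <- Rmult_assoc, Rinv_l by lra. replace (/ (Rabs c + 1) * eps) with (eps / (Rabs c + 1)) by (field; lra). lra.
Qed.

Lemma IMP_le f g L1 L2 : (forall x, f x <= g x) -> IMP f L1 -> IMP g L2 -> L1 <= L2.
Proof.
  intros Hle H1 H2. destruct (Rle_lt_dec L1 L2) as [|Hlt]; auto. exfalso.
  assert (e : 0 < (L1 - L2) / 2) by lra.
  destruct (H1 _ e) as [A1 HA1]. destruct (H2 _ e) as [A2 HA2].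
  set (A := Rmax (Rabs A1) (Rabs A2)).
  assert (a1 : Rabs A1 <= A) by apply Rmax_l. assert (a2 : Rabs A2 <= A) by apply Rmax_r.
  pose proof (Rle_abs A1). pose proof (Rle_abs A2).
  pose proof (Rabs_pos A1). pose proof (Rabs_pos A2).
  destruct (HA1 (-A) A) as [x1 h1]; try lra. destruct (HA2 (-A) A) as [x2 h2]; try lra.
  assert (RInt f (-A) A <= RInt g (-A) A). { apply RInt_le; auto. lra. }
  apply Rabs_def2 in h1. apply Rabs_def2 in h2. lra.
Qed.

Lemma IMP_improper f L : IMP f L -> improper_int f L.
Proof.
  intros H eps He. destruct (H eps He) as [A HA]. exists A. intros a b Ha Hb.
  destruct (HA a b Ha Hb) as [e r]. exists (ex_RInt_Reals_0 f a b e).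
  rewrite <- RInt_Reals. auto.
Qed.

Lemma improper_IMP f L : improper_int f L -> IMP f L.
Proof.
  intros H eps He. destruct (H eps He) as [A HA]. exists A. intros a b Ha Hb.
  destruct (HA a b Ha Hb) as [pr r]. split. apply ex_RInt_Reals_1; auto.
  rewrite (RInt_Reals f a b pr). auto.
Qed.

Lemma G_odd y : G (- y) = - G y.
Proof.
  assert (E := RInt_comp_lin (V:=R_CompleteNormedModule) gf (-1) 0 0 y).
  unfold scal in E; simpl in E; unfold mult in E; simpl in E.
  unfold G. toR.
  replace (-y) with (-1 * y + 0) by ring.
  replace 0 with (-1 * 0 + 0) at 1 by ring.
  rewrite <- E. 2: apply ex_gf.
  rewrite (RInt_ext (V:=R_CompleteNormedModule) _ (fun t => -1 * gf t)).
  rewrite (RInt_scal (V:=R_CompleteNormedModule)). unfold scal; simpl; unfold mult; simpl. toR. ring.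
  apply ex_gf.
  intros t _. unfold gf. toR. f_equal. f_equal. ring.
Qed.

Lemma RInt_phi a b : RInt phi a b = (G (b / sqrt 2) + G (- a / sqrt 2)) / sqrt PI.
Proof.
  assert (ex : forall c d, ex_RInt phi c d) by (intros; apply exc; apply phi0_cont).
  assert (Ch := RInt_Chasles (V:=R_CompleteNormedModule) phi 0 a b (ex _ _) (ex _ _)).
  unfold plus in Ch; simpl in Ch.
  assert (RInt phi a b = RInt phi 0 b - RInt phi 0 a) by (toR; lra).
  rewrite H. fold phi0. rewrite !RInt_phi0_0.
  replace (- a / sqrt 2) with (- (a / sqrt 2)) by (unfold Rdiv; ring). rewrite G_odd.
  pose proof PI_RGT_0. assert (0 < sqrt PI) by (apply sqrt_lt_R0; lra). toR. field. lra.
Qed.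

Lemma gf_mono y Y : 0 <= Y <= y -> gf y <= gf Y.
Proof.
  intros. unfold gf. destruct (Req_dec y Y). subst; lra.
  apply Rlt_le, exp_increasing. nra.
Qed.

Lemma gf_small Y : 0 < Y -> gf Y < / Y.
Proof.
  intros. unfold gf. pose proof (exp_ineq1 (Y*Y)).
  assert (exp (Y*Y) > Y) by (assert (Y*Y<>0) by nra; specialize (H0 H1); nra).
  rewrite exp_Ropp. apply Rinv_lt_contravar. nra. lra.
Qed.

Lemma IMP_phi : IMP phi 1.
Proof.
  pose proof PI_RGT_0. assert (sp : 0 < sqrt PI) by (apply sqrt_lt_R0; lra).
  assert (sq : sqrt PI * sqrt PI = PI) by (apply sqrt_sqrt; lra).
  assert (s2 : 0 < sqrt 2) by (apply sqrt_lt_R0; lra).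
  intros eps He. set (Y := 4 / (PI * eps) + 1).
  assert (HY : 1 <= Y). { unfold Y. assert (0 < 4 / (PI*eps)). apply Rdiv_lt_0_compat; nra. lra. }
  exists (sqrt 2 * Y). intros a b Ha Hb. split. apply exc; apply phi0_cont.
  rewrite RInt_phi.
  assert (yb : Y <= b / sqrt 2). { apply Rmult_le_reg_r with (sqrt 2); auto. unfold Rdiv. rewrite Rmult_assoc, Rinv_l; lra. }
  assert (ya : Y <= - a / sqrt 2). { apply Rmult_le_reg_r with (sqrt 2); auto. unfold Rdiv. rewrite Rmult_assoc, Rinv_l; lra. }
  pose proof (G_close (b / sqrt 2)) as c1. pose proof (G_close (- a / sqrt 2)) as c2.
  pose proof (gf_mono (b/sqrt 2) Y). pose proof (gf_mono (-a/sqrt 2) Y). pose proof (gf_small Y).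
  assert (gY : 0 <= gf Y) by (unfold gf; apply Rlt_le, exp_pos).
  replace ((G (b / sqrt 2) + G (- a / sqrt 2)) / sqrt PI - 1) with
     (((G (b / sqrt 2) - sqrt PI / 2) + (G (- a / sqrt 2) - sqrt PI / 2)) / sqrt PI) by (field; lra).
  unfold Rdiv at 1. rewrite Rabs_mult, (Rabs_right (/ sqrt PI)) by (apply Rle_ge, Rlt_le, Rinv_0_lt_compat; lra).
  apply Rle_lt_trans with ((2 * gf Y / sqrt PI + 2 * gf Y / sqrt PI) * / sqrt PI).
  - apply Rmult_le_compat_r. apply Rlt_le, Rinv_0_lt_compat; lra.
    eapply Rle_trans. apply Rabs_triang.
    assert (2 * gf (b / sqrt 2) / sqrt PI <= 2 * gf Y / sqrt PI).
    { unfold Rdiv; apply Rmult_le_compat_r. apply Rlt_le, Rinv_0_lt_compat; lra. assert (gf (b/sqrt 2) <= gf Y) by (apply H0; lra). lra. }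
    assert (2 * gf (-a / sqrt 2) / sqrt PI <= 2 * gf Y / sqrt PI).
    { unfold Rdiv; apply Rmult_le_compat_r. apply Rlt_le, Rinv_0_lt_compat; lra. assert (gf (-a/sqrt 2) <= gf Y) by (apply H1; lra). lra. }
    assert (Rabs (G (b / sqrt 2) - sqrt PI / 2) <= 2 * gf (b / sqrt 2) / sqrt PI) by (apply c1; lra).
    assert (Rabs (G (- a / sqrt 2) - sqrt PI / 2) <= 2 * gf (- a / sqrt 2) / sqrt PI) by (apply c2; lra).
    lra.
  - replace ((2 * gf Y / sqrt PI + 2 * gf Y / sqrt PI) * / sqrt PI) with (4 * gf Y / (sqrt PI * sqrt PI)) by (field; lra). rewrite sq.
    assert (gf Y < / Y) by (apply H2; lra).
    assert (/ Y <= PI * eps / 4).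
    { unfold Y. rewrite <- (Rinv_inv (PI*eps/4)). apply Rinv_le_contravar.
      apply Rinv_0_lt_compat; nra. replace (/ (PI*eps/4)) with (4 / (PI*eps)) by (field; lra). lra. }
    apply Rmult_lt_reg_r with (PI / 4). lra. replace (4 * gf Y / PI * (PI / 4)) with (gf Y) by (field; lra). nra.
Qed.

Definition ea (x : R) := exp (- Rabs x).

Lemma ea_cont x : continuous ea x.
Proof.
  unfold ea. apply (continuous_comp (fun x => - Rabs x) exp).
  - apply (continuous_opp (K:=R_AbsRing) (V:=R_NormedModule) Rabs). apply continuous_Rabs.
  - apply continuous_exp.
Qed.

Lemma tail_r c d : 0 <= c <= d -> RInt ea c d <= exp (- c).
Proof.
  intros Hc.
  rewrite (RInt_ext (V:=R_CompleteNormedModule) ea (fun x => exp (- x))).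
  - rewrite (is_RInt_unique (V:=R_CompleteNormedModule) _ c d (minus (- exp (- d)) (- exp (- c)))).
    + unfold minus, plus, opp; simpl. pose proof (exp_pos (-d)). lra.
    + apply (is_RInt_derive (V:=R_CompleteNormedModule) (fun x => - exp (- x))).
      * intros; auto_derive; auto. ring.
      * intros; apply dcont; auto_derive; auto.
  - intros x Hx. rewrite Rmin_left in Hx by lra. unfold ea. rewrite Rabs_right by lra. auto.
Qed.

Lemma tail_l c d : c <= d <= 0 -> RInt ea c d <= exp d.
Proof.
  intros Hc.
  rewrite (RInt_ext (V:=R_CompleteNormedModule) ea (fun x => exp x)).
  - rewrite (is_RInt_unique (V:=R_CompleteNormedModule) _ c d (minus (exp d) (exp c))).
    + unfold minus, plus, opp; simpl. pose proof (exp_pos c). lra.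
    + apply (is_RInt_derive (V:=R_CompleteNormedModule) exp).
      * intros; auto_derive; auto. ring.
      * intros; apply continuous_exp.
  - intros x Hx. rewrite Rmax_right in Hx by lra. unfold ea. rewrite Rabs_left by lra. f_equal; ring.
Qed.

Section Exist.
Variable f : R -> R.
Variable K : R.
Hypothesis fc : forall x, continuous f x.
Hypothesis fb : forall x, Rabs (f x) <= K * ea x.

Lemma ex_f a b : ex_RInt f a b.
Proof. apply exc; auto. Qed.

Lemma bound_seg c d : c <= d -> Rabs (RInt f c d) <= K * RInt ea c d.
Proof.
  intros Hcd. eapply Rle_trans. apply abs_RInt_le; auto. apply ex_f.
  rewrite <- (RInt_scal (V:=R_CompleteNormedModule)). 2: apply exc, ea_cont.
  apply RInt_le. exact Hcd.
  - apply exc. intro; apply (continuous_comp f Rabs). auto. apply continuous_Rabs.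
  - apply exc. intro. apply (continuous_scal_r (K:=R_AbsRing) (V:=R_NormedModule) K ea). apply ea_cont.
  - intros; apply fb.
Qed.

Lemma K_nonneg : 0 <= K.
Proof. pose proof (fb 0). pose proof (Rabs_pos (f 0)). unfold ea in H. pose proof (exp_pos (- Rabs 0)). nra. Qed.

Lemma diff_bound A a a' b b' : 0 <= A -> a' <= a <= -A -> A <= b <= b' ->
  Rabs (RInt f a' b' - RInt f a b) <= 2 * K * exp (- A).
Proof.
  intros HA Ha Hb.
  assert (C1 := RInt_Chasles (V:=R_CompleteNormedModule) f a' a b' (ex_f _ _) (ex_f _ _)).
  assert (C2 := RInt_Chasles (V:=R_CompleteNormedModule) f a b b' (ex_f _ _) (ex_f _ _)).
  unfold plus in C1, C2; simpl in C1, C2.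
  replace (RInt f a' b' - RInt f a b) with (RInt f a' a + RInt f b b') by (toR; lra).
  eapply Rle_trans. apply Rabs_triang.
  pose proof (bound_seg a' a). pose proof (bound_seg b b').
  pose proof (tail_l a' a). pose proof (tail_r b b'). pose proof K_nonneg.
  assert (exp a <= exp (- A)). { destruct (Req_dec a (-A)). subst; lra. apply Rlt_le, exp_increasing; lra. }
  assert (exp (- b) <= exp (- A)). { destruct (Req_dec b A). subst; lra. apply Rlt_le, exp_increasing; lra. }
  assert (K * RInt ea a' a <= K * exp (- A)) by (apply Rmult_le_compat_l; lra).
  assert (K * RInt ea b b' <= K * exp (- A)) by (apply Rmult_le_compat_l; lra).
  assert (Rabs (RInt f a' a) <= K * RInt ea a' a) by (apply H; lra).
  assert (Rabs (RInt f b b') <= K * RInt ea b b') by (apply H0; lra).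
  lra.
Qed.

Lemma exp_nat_small (N : nat) : exp (- INR N) <= / (INR N + 1).
Proof.
  rewrite exp_Ropp. pose proof (pos_INR N). apply Rinv_le_contravar. lra.
  destruct (Req_dec (INR N) 0). rewrite H0, exp_0. lra.
  pose proof (exp_ineq1 (INR N) H0). lra.
Qed.

Lemma small_N eps : 0 < eps -> exists N : nat, 2 * K * exp (- INR N) < eps.
Proof.
  intros He. destruct (INR_unbounded (2 * K / eps)) as [N HN]. exists N.
  pose proof (exp_nat_small N). pose proof K_nonneg. pose proof (pos_INR N).
  apply Rle_lt_trans with (2 * K * / (INR N + 1)). apply Rmult_le_compat_l; lra.
  apply Rmult_lt_reg_r with (INR N + 1). lra. rewrite Rmult_assoc, Rinv_l by lra.
  apply Rmult_lt_reg_r with (/ eps). apply Rinv_0_lt_compat; lra.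
  replace (eps * (INR N + 1) * / eps) with (INR N + 1) by (field; lra). unfold Rdiv in HN. lra.
Qed.

Lemma IMP_exist : exists L, IMP f L.
Proof.
  set (u := fun k : nat => (RInt f (- INR k) (INR k) : R)).
  assert (Hu : forall k k', (k <= k')%nat -> Rabs (u k' - u k) <= 2 * K * exp (- INR k)).
  { intros k k' Hk. unfold u. apply diff_bound; pose proof (pos_INR k); pose proof (le_INR _ _ Hk); lra. }
  assert (Cc : Cauchy_crit u).
  { intros eps He. destruct (small_N eps He) as [N HN]. exists N. intros n m Hn Hm.
    unfold Rdist. destruct (Nat.le_ge_cases n m).
    - pose proof (Hu n m H). assert (exp (- INR n) <= exp (- INR N)).
      { destruct (Nat.eq_dec n N). subst; lra. apply Rlt_le, exp_increasing. apply Ropp_lt_contravar, lt_INR. lia. }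
      rewrite Rabs_minus_sym. pose proof K_nonneg. nra.
    - pose proof (Hu m n H). assert (exp (- INR m) <= exp (- INR N)).
      { destruct (Nat.eq_dec m N). subst; lra. apply Rlt_le, exp_increasing. apply Ropp_lt_contravar, lt_INR. lia. }
      pose proof K_nonneg. nra. }
  destruct (Rcomplete.R_complete u Cc) as [L HL]. exists L.
  intros eps He. destruct (small_N (eps/3)) as [N HN]. lra.
  exists (INR N). intros a b Ha Hb. split. apply ex_f.
  destruct (HL (eps/3)) as [M HM]. lra.
  specialize (HM (max N M) (Nat.le_max_r _ _)). unfold Rdist in HM.
  pose proof (Hu N (max N M) (Nat.le_max_l _ _)).
  pose proof (pos_INR N).
  assert (Rabs (RInt f a b - u N) <= 2 * K * exp (- INR N)).
  { unfold u. apply diff_bound; lra. }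
  replace (RInt f a b - L) with ((RInt f a b - u N) + (u N - u (max N M)) + (u (max N M) - L)) by ring.
  eapply Rle_lt_trans. eapply Rle_trans. apply Rabs_triang. apply Rplus_le_compat_r. apply Rabs_triang.
  rewrite (Rabs_minus_sym (u N)). lra.
Qed.

End Exist.

Fixpoint rprod (m : nat) (f : nat -> R) : R :=
  match m with O => 1 | S m' => rprod m' f * f m' end.

Lemma fold_plus_shift (l : list R) c : fold_right Rplus c l = fold_right Rplus 0 l + c.
Proof. induction l; simpl; [ring| rewrite IHl; ring]. Qed.

Lemma rsum_S n f : rsum (S n) f = rsum n f + f n.
Proof.
  unfold rsum. rewrite seq_S, map_app, fold_right_app. simpl.
  rewrite fold_plus_shift. ring.
Qed.

Lemma rsum_0 f : rsum 0 f = 0.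
Proof. reflexivity. Qed.

Lemma rsum_ext n f g : (forall i, (i < n)%nat -> f i = g i) -> rsum n f = rsum n g.
Proof.
  induction n; intros H. reflexivity. rewrite !rsum_S, IHn, H. auto. lia. intros; apply H; lia.
Qed.

Lemma rsum_plus n f g : rsum n (fun i => f i + g i) = rsum n f + rsum n g.
Proof. induction n. rewrite !rsum_0; ring. rewrite !rsum_S, IHn. ring. Qed.

Lemma rsum_scal n c f : rsum n (fun i => c * f i) = c * rsum n f.
Proof. induction n. rewrite !rsum_0; ring. rewrite !rsum_S, IHn. ring. Qed.

Lemma rprod_ext m f g : (forall j, (j < m)%nat -> f j = g j) -> rprod m f = rprod m g.
Proof.
  induction m; intros H. reflexivity. simpl. rewrite IHm, H. auto. lia. intros; apply H; lia.
Qed.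

Lemma rprod_mult m f g : rprod m (fun j => f j * g j) = rprod m f * rprod m g.
Proof. induction m. simpl; ring. simpl. rewrite IHm. ring. Qed.

Lemma IMP_zero : IMP (fun _ => 0) 0.
Proof.
  apply IMP_ext with (fun x => 0 * phi x). intros; ring.
  assert (H : IMP (fun x => 0 * phi x) (0*1)) by (apply IMP_scal, IMP_phi).
  replace (0*1) with 0 in H by ring. exact H.
Qed.

Lemma IMP_rsum N (h : nat -> R -> R) (L : nat -> R) :
  (forall i, (i < N)%nat -> IMP (h i) (L i)) -> IMP (fun t => rsum N (fun i => h i t)) (rsum N L).
Proof.
  induction N; intros H.
  - apply IMP_ext with (fun _ => 0). intros; reflexivity. apply IMP_zero.
  - apply IMP_ext with (fun t => rsum N (fun i => h i t) + h N t).
    intros; rewrite rsum_S; auto. rewrite rsum_S. apply IMP_plus. apply IHN. intros; apply H; lia. apply H; lia.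
Qed.

Lemma gauss_exp_ext m : forall F G L, (forall z, F z = G z) -> gauss_exp m F L -> gauss_exp m G L.
Proof.
  induction m; simpl; intros F G L E H.
  - rewrite H; auto.
  - destruct H as [g [H1 H2]]. exists g. split; auto.
    intros t. apply IHm with (fun z => F (upd z m t)); auto.
Qed.

Lemma gexp_sop m : forall (N : nat) (c : nat -> nat -> R) (f : nat -> nat -> nat -> R -> R)
  (e : nat -> nat -> nat -> R) F,
  (forall z, F z = rsum N (fun i => rsum N (fun i' => c i i' * rprod m (fun j => f i i' j (z j))))) ->
  (forall i i' j, (j < m)%nat -> IMP (fun t => phi t * f i i' j t) (e i i' j)) ->
  gauss_exp m F (rsum N (fun i => rsum N (fun i' => c i i' * rprod m (e i i')))).
Proof.
  induction m; intros N c f e F HF He.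
  - simpl. rewrite HF. apply rsum_ext; intros. apply rsum_ext; intros. reflexivity.
  - simpl.
    exists (fun t => rsum N (fun i => rsum N (fun i' => (c i i' * f i i' m t) * rprod m (e i i')))).
    split.
    + intro t. apply IHm with (f := f).
      * intro z. rewrite HF. apply rsum_ext; intros i _. apply rsum_ext; intros i' _. simpl.
        unfold upd at 2. rewrite Nat.eqb_refl.
        rewrite (rprod_ext m (fun j => f i i' j (upd z m t j)) (fun j => f i i' j (z j))). ring.
        intros j Hj. unfold upd. replace (Nat.eqb j m) with false. auto.
        symmetry; apply Nat.eqb_neq; lia.
      * intros; apply He; lia.
    + apply IMP_improper.
      replace (rsum N (fun i => rsum N (fun i' => c i i' * (rprod m (e i i') * e i i' m))))
        with (rsum N (fun i => rsum N (fun i' => (c i i' * rprod m (e i i')) * e i i' m))).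
      2:{ apply rsum_ext; intros. apply rsum_ext; intros. ring. }
      apply IMP_ext with (fun t => rsum N (fun i => rsum N (fun i' => (c i i' * rprod m (e i i')) * (phi t * f i i' m t)))).
      { intro t. rewrite <- rsum_scal. apply rsum_ext; intros. rewrite <- rsum_scal. apply rsum_ext; intros. ring. }
      apply IMP_rsum. intros i _. apply IMP_rsum. intros i' _. apply IMP_scal. apply He. lia.
Qed.

Definition Kp := 64 * exp 1 / sqrt (2 * PI).

Lemma sqrt2pi_pos : 0 < sqrt (2 * PI).
Proof. apply sqrt_lt_R0. pose proof PI_RGT_0; lra. Qed.

Lemma exp_ge_sq u : 0 <= u -> (1 + u/2)^2 <= exp u.
Proof.
  intros. replace u with (u/2 + u/2) at 2 by field. rewrite exp_plus.
  assert (1 + u/2 <= exp (u/2)).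
  { destruct (Req_dec u 0). subst. replace (0/2) with 0 by field. rewrite exp_0. lra.
    apply Rlt_le, exp_ineq1. lra. }
  simpl. nra.
Qed.

Lemma phi_pos t : 0 < phi t.
Proof. unfold phi. apply Rdiv_lt_0_compat. apply exp_pos. apply sqrt2pi_pos. Qed.

Lemma phi_poly_bound t : phi t * (1 + t*t)^2 <= Kp * ea t.
Proof.
  unfold phi, Kp, ea. pose proof sqrt2pi_pos.
  assert (A : (1 + t*t)^2 <= 64 * exp (t*t/4)).
  { pose proof (exp_ge_sq (t*t/4)). assert (0 <= t*t/4) by nra. specialize (H0 H1). nra. }
  assert (B : exp (t*t/4) <= exp 1 * exp (t*t/2 - Rabs t)).
  { rewrite <- exp_plus. destruct (Req_dec (t*t/4) (1 + (t*t/2 - Rabs t))) as [E|E].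
    rewrite E; lra. apply Rlt_le, exp_increasing.
    pose proof (Rabs_pos t). assert (Rabs t * Rabs t = t * t) by (rewrite <- Rabs_mult; apply Rabs_right; nra).
    assert (0 <= (Rabs t / 2 - 1)^2) by (apply pow2_ge_0). nra. }
  assert (C : exp (- (t*t)/2) * exp (t*t/2 - Rabs t) = exp (- Rabs t)).
  { rewrite <- exp_plus. f_equal. field. }
  pose proof (exp_pos (- (t*t)/2)).
  apply Rle_trans with (exp (- (t * t) / 2) / sqrt (2 * PI) * (64 * (exp 1 * exp (t*t/2 - Rabs t)))).
  - apply Rmult_le_compat_l. apply Rlt_le, Rdiv_lt_0_compat; lra. pose proof (exp_pos 1). nra.
  - rewrite <- C. apply Req_le. field. lra.
Qed.

Lemma Kp_pos : 0 < Kp.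
Proof. unfold Kp. apply Rdiv_lt_0_compat. pose proof (exp_pos 1); lra. apply sqrt2pi_pos. Qed.

Lemma IMP_poly_exist g M : (forall t, continuous g t) -> (forall t, Rabs (g t) <= M * (1 + t*t)^2) ->
  exists L, IMP (fun t => phi t * g t) L.
Proof.
  intros gc gb. apply (IMP_exist _ (M * Kp)).
  - intro t. apply (continuous_mult (K:=R_AbsRing) phi g). apply phi0_cont. apply gc.
  - intro t. rewrite Rabs_mult, (Rabs_right (phi t)) by (apply Rle_ge, Rlt_le, phi_pos).
    pose proof (phi_pos t). pose proof (phi_poly_bound t). specialize (gb t).
    assert (0 <= M). { pose proof (Rabs_pos (g t)). assert (0 < (1+t*t)^2) by (apply pow_lt; nra). nra. }
    apply Rle_trans with (phi t * (M * (1 + t*t)^2)). apply Rmult_le_compat_l; lra.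
    replace (phi t * (M * (1 + t * t) ^ 2)) with (M * (phi t * (1 + t * t) ^ 2)) by ring.
    rewrite Rmult_assoc. apply Rmult_le_compat_l; lra.
Qed.

Lemma small_exp K eps : 0 <= K -> 0 < eps -> exists N : nat, 2 * K * exp (- INR N) < eps.
Proof.
  intros HK He. destruct (INR_unbounded (2 * K / eps)) as [N HN]. exists N.
  pose proof (exp_nat_small N). pose proof (pos_INR N).
  apply Rle_lt_trans with (2 * K * / (INR N + 1)). apply Rmult_le_compat_l; lra.
  apply Rmult_lt_reg_r with (INR N + 1). lra. rewrite Rmult_assoc, Rinv_l by lra.
  apply Rmult_lt_reg_r with (/ eps). apply Rinv_0_lt_compat; lra.
  replace (eps * (INR N + 1) * / eps) with (INR N + 1) by (field; lra). unfold Rdiv in HN. lra.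
Qed.

Lemma IMP_deriv_zero (P h : R -> R) M : 0 <= M ->
  (forall t, is_derive P t (h t)) -> (forall t, continuous h t) ->
  (forall t, Rabs (P t) <= M * ea t) -> IMP h 0.
Proof.
  intros HM Hd hc Hb eps He. destruct (small_exp M eps HM He) as [N HN].
  exists (INR N). intros a b Ha Hb'. pose proof (pos_INR N). split. apply exc; auto.
  rewrite (is_RInt_unique (V:=R_CompleteNormedModule) h a b (minus (P b) (P a))).
  2:{ apply (is_RInt_derive (V:=R_CompleteNormedModule)). intros; apply Hd. intros; apply hc. }
  unfold minus, plus, opp; simpl. rewrite Rminus_0_r.
  assert (ea a <= exp (- INR N)).
  { unfold ea. rewrite Rabs_left1 by lra. destruct (Req_dec a (- INR N)). subst. rewrite Ropp_involutive. lra.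
    apply Rlt_le, exp_increasing. lra. }
  assert (ea b <= exp (- INR N)).
  { unfold ea. rewrite Rabs_right by lra. destruct (Req_dec b (INR N)). subst. lra.
    apply Rlt_le, exp_increasing. lra. }
  eapply Rle_lt_trans. apply Rabs_triang. rewrite Rabs_Ropp.
  pose proof (Hb a). pose proof (Hb b).
  assert (M * ea a <= M * exp (- INR N)) by (apply Rmult_le_compat_l; lra).
  assert (M * ea b <= M * exp (- INR N)) by (apply Rmult_le_compat_l; lra).
  lra.
Qed.

Lemma poly_phi_bound (p : R -> R) c t : Rabs (p t) <= c * (1 + t*t)^2 -> 0 <= c ->
  Rabs (- p t * phi t) <= (c * Kp) * ea t.
Proof.
  intros H Hc. rewrite Rabs_mult, Rabs_Ropp, (Rabs_right (phi t)) by (apply Rle_ge, Rlt_le, phi_pos).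
  pose proof (phi_pos t). pose proof (phi_poly_bound t).
  apply Rle_trans with (c * (1 + t*t)^2 * phi t). apply Rmult_le_compat_r; lra.
  replace (c * (1 + t*t)^2 * phi t) with (c * (phi t * (1 + t*t)^2)) by ring.
  rewrite Rmult_assoc. apply Rmult_le_compat_l; lra.
Qed.

Ltac phid := unfold phi; auto_derive; [pose proof sqrt2pi_pos; lra | pose proof sqrt2pi_pos; toR; unfold Rdiv; field; lra].

Lemma IMP_m1 : IMP (fun t => phi t * t) 0.
Proof.
  apply (IMP_deriv_zero (fun t => - 1 * phi t) _ (1 * Kp)).
  pose proof Kp_pos; lra.
  - intro t. phid.
  - intro t. apply (continuous_mult (K:=R_AbsRing) phi (fun t => t)). apply phi0_cont. apply continuous_id.
  - intro t. apply (poly_phi_bound (fun _ => 1)). rewrite Rabs_R1. nra. lra.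
Qed.

Lemma abs_t_bound t : Rabs t <= 1 * (1 + t*t)^2.
Proof. destruct (Rabs_pos t). apply Rle_trans with (1 + t*t). unfold Rabs; destruct (Rcase_abs t); nra. nra. nra. Qed.

Lemma abs_t3_bound t : Rabs (t*t*t + 3*t) <= 4 * (1 + t*t)^2.
Proof. unfold Rabs; destruct (Rcase_abs (t*t*t + 3*t)); simpl; nra. Qed.

Lemma phi_cont_mul (g : R -> R) : (forall t, continuous g t) -> forall t, continuous (fun t => phi t * g t) t.
Proof. intros gc t. apply (continuous_mult (K:=R_AbsRing) phi g). apply phi0_cont. apply gc. Qed.

Lemma poly_cont (g : R -> R) : (forall t, ex_derive g t) -> forall t, continuous g t.
Proof. intros; apply dcont; auto. Qed.

Lemma IMP_m2 : IMP (fun t => phi t * (t*t)) 1.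
Proof.
  assert (H0 : IMP (fun t => phi t * (t*t) - phi t) 0).
  { apply (IMP_deriv_zero (fun t => - t * phi t) _ (1 * Kp)).
    pose proof Kp_pos; lra.
    - intro t. phid.
    - intro t. apply (continuous_minus (V:=R_NormedModule) (fun t => phi t * (t*t)) phi).
      apply phi_cont_mul. apply poly_cont; intros; auto_derive; auto. apply phi0_cont.
    - intro t. apply (poly_phi_bound (fun t => t)). apply abs_t_bound. lra. }
  assert (H1 := IMP_plus _ _ _ _ H0 IMP_phi). replace (0+1) with 1 in H1 by ring.
  apply IMP_ext with (2 := H1). intros; ring.
Qed.

Lemma IMP_m4 : IMP (fun t => phi t * (t*t*t*t)) 3.
Proof.
  assert (H0 : IMP (fun t => phi t * (t*t*t*t) - 3 * phi t) 0).
  { apply (IMP_deriv_zero (fun t => - (t*t*t + 3*t) * phi t) _ (4 * Kp)).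
    pose proof Kp_pos; lra.
    - intro t. phid.
    - intro t. apply (continuous_minus (V:=R_NormedModule) (fun t => phi t * (t*t*t*t)) (fun t => 3 * phi t)).
      apply phi_cont_mul. apply poly_cont; intros; auto_derive; auto.
      apply poly_cont; intros; unfold phi; auto_derive; pose proof sqrt2pi_pos; lra.
    - intro t. apply (poly_phi_bound (fun t => t*t*t + 3*t)). apply abs_t3_bound. lra. }
  assert (H1 := IMP_plus _ _ _ _ H0 (IMP_scal _ 3 _ IMP_phi)). replace (0+3*1) with 3 in H1 by ring.
  apply IMP_ext with (2 := H1). intros; ring.
Qed.

Definition EV (g : R -> R) : R := epsilon (inhabits 0) (fun L => IMP (fun t => phi t * g t) L).

Lemma EV_spec g : (exists L, IMP (fun t => phi t * g t) L) -> IMP (fun t => phi t * g t) (EV g).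
Proof. intro H. exact (epsilon_spec (inhabits 0) (fun L => IMP (fun t => phi t * g t) L) H). Qed.

Lemma EV_eq g L : IMP (fun t => phi t * g t) L -> EV g = L.
Proof. intro H. apply (IMP_unique (fun t => phi t * g t)). apply EV_spec. eauto. auto. Qed.

Lemma EV_one : EV (fun _ => 1) = 1.
Proof. apply EV_eq. apply IMP_ext with phi. intros; ring. apply IMP_phi. Qed.

Definition nice (g : R -> R) := (forall t, continuous g t) /\ exists M, forall t, Rabs (g t) <= M * (1 + t*t).

Lemma nice_prod g h : nice g -> nice h -> exists L, IMP (fun t => phi t * (g t * h t)) L.
Proof.
  intros [gc [M gb]] [hc [M' hb]]. apply (IMP_poly_exist _ (M * M')).
  - intro t. apply (continuous_mult (K:=R_AbsRing) g h); auto.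
  - intro t. rewrite Rabs_mult. specialize (gb t). specialize (hb t).
    pose proof (Rabs_pos (g t)). pose proof (Rabs_pos (h t)).
    replace (M * M' * (1 + t*t)^2) with ((M * (1 + t*t)) * (M' * (1 + t*t))) by ring.
    apply Rmult_le_compat; auto.
Qed.

Lemma nice_one : nice (fun _ => 1).
Proof. split. intro; apply continuous_const. exists 1. intro t. rewrite Rabs_R1. nra. Qed.

Lemma nice_ex g : nice g -> exists L, IMP (fun t => phi t * g t) L.
Proof.
  intros Hg. destruct (nice_prod g (fun _ => 1) Hg nice_one) as [L HL]. exists L.
  apply IMP_ext with (2 := HL). intros; ring.
Qed.

Lemma pos_part_eq x : pos_part x = (x + Rabs x) / 2.
Proof. unfold pos_part, Rmax, Rabs. destruct (Rle_dec x 0), (Rcase_abs x); lra. Qed.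

Lemma pos_part_ge0 x : 0 <= pos_part x.
Proof. unfold pos_part. apply Rmax_r. Qed.

Lemma pos_part_ge x : x <= pos_part x.
Proof. unfold pos_part. apply Rmax_l. Qed.

Lemma pos_part_le_abs x : pos_part x <= Rabs x.
Proof. rewrite pos_part_eq. pose proof (Rle_abs x). lra. Qed.

Lemma pos_part_split x : pos_part x = x + pos_part (- x).
Proof. unfold pos_part, Rmax. destruct (Rle_dec x 0), (Rle_dec (-x) 0); lra. Qed.

Lemma cont_pos_part (g : R -> R) : (forall t, continuous g t) -> forall t, continuous (fun t => pos_part (g t)) t.
Proof.
  intros gc t. apply (continuous_ext (fun t => / 2 * (g t + Rabs (g t)))).
  intros; rewrite pos_part_eq; unfold Rdiv; toR; ring.
  apply (continuous_scal_r (K:=R_AbsRing) (V:=R_NormedModule) (/2) (fun t => g t + Rabs (g t))).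
  apply (continuous_plus (V:=R_NormedModule) g (fun t => Rabs (g t))). auto.
  apply (continuous_comp g Rabs). auto. apply continuous_Rabs.
Qed.

Section Coord.
Variables s T mu0 : R.
Hypothesis s_pos : 0 < s.
Hypothesis T_nonneg : 0 <= T.
Hypothesis Hmu0 : IMP (fun t => phi t * pos_part ((s*t)^2 - s^2*T)) mu0.

Definition Uf (m t : R) : R := pos_part ((m + s*t)^2 - s^2*T) - mu0.

Lemma Uf_nice m : nice (Uf m).
Proof.
  split.
  - intro t. unfold Uf. apply (continuous_minus (V:=R_NormedModule) _ (fun _ => mu0)).
    apply cont_pos_part. intro; apply dcont; auto_derive; auto. apply continuous_const.
  - exists (2*m^2 + 2*s^2 + s^2*T + Rabs mu0). intro t. unfold Uf.
    eapply Rle_trans. unfold Rminus at 1. apply Rabs_triang. rewrite Rabs_Ropp.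
    pose proof (pos_part_le_abs ((m + s*t)^2 - s^2*T)). pose proof (pos_part_ge0 ((m + s*t)^2 - s^2*T)).
    rewrite (Rabs_right (pos_part _)) by lra.
    assert (Rabs ((m + s * t) ^ 2 - s ^ 2 * T) <= (m + s*t)^2 + s^2*T).
    { assert (0 <= s^2*T) by (apply Rmult_le_pos; nra). assert (0 <= (m+s*t)^2) by apply pow2_ge_0.
      unfold Rabs; destruct (Rcase_abs ((m + s * t) ^ 2 - s ^ 2 * T)); nra. }
    pose proof (Rabs_pos mu0). assert (0 <= t*t) by nra.
    assert ((m + s*t)^2 <= 2*m^2 + 2*s^2*(t*t)) by (assert (0 <= (m - s*t)^2) by apply pow2_ge_0; nra).
    assert (0 <= s^2*T) by (apply Rmult_le_pos; nra).
    assert (0 <= m^2) by apply pow2_ge_0.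
    assert ((2*m^2 + 2*s^2 + s^2*T + Rabs mu0) * (1 + t*t) >= 2*m^2 + 2*s^2*(t*t) + s^2*T + Rabs mu0).
    { assert (0 <= (2*m^2 + s^2*T + Rabs mu0) * (t*t)) by (apply Rmult_le_pos; lra).
      assert (0 <= 2*s^2) by nra. nra. }
    lra.
Qed.

Definition al (m : R) := EV (Uf m).
Definition s2 (m : R) := EV (fun t => Uf m t * Uf m t).

Lemma al_spec m : IMP (fun t => phi t * Uf m t) (al m).
Proof. apply EV_spec, nice_ex, Uf_nice. Qed.

Lemma s2_spec m : IMP (fun t => phi t * (Uf m t * Uf m t)) (s2 m).
Proof. apply EV_spec, nice_prod; apply Uf_nice. Qed.

Lemma mu0_bounds : 0 <= mu0 <= s^2.
Proof.
  split.
  - apply (IMP_le (fun _ => 0) (fun t => phi t * pos_part ((s*t)^2 - s^2*T))). 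
    intro; pose proof (phi_pos x); pose proof (pos_part_ge0 ((s*x)^2 - s^2*T)); nra.
    apply IMP_zero. auto.
  - apply (IMP_le (fun t => phi t * pos_part ((s*t)^2 - s^2*T)) (fun t => s^2 * (phi t * (t*t)))).
    intro t. pose proof (phi_pos t). assert (pos_part ((s*t)^2 - s^2*T) <= s^2 * (t*t)).
    { unfold pos_part. apply Rmax_lub. assert (0 <= s^2*T) by (apply Rmult_le_pos; nra). nra. nra. }
    nra.
    auto. assert (H := IMP_scal _ (s^2) _ IMP_m2). replace (s^2*1) with (s^2) in H by ring. exact H.
Qed.

Lemma al0 : al 0 = 0.
Proof.
  apply EV_eq. apply IMP_ext with (fun t => phi t * pos_part ((s*t)^2 - s^2*T) + (- mu0) * phi t).
  intro t. unfold Uf. replace ((0 + s*t)^2) with ((s*t)^2) by ring. ring.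
  replace 0 with (mu0 + - mu0 * 1) by ring. apply IMP_plus. auto. apply IMP_scal, IMP_phi.
Qed.

Lemma IMP_Y2 m : IMP (fun t => phi t * (m + s*t)^2) (m^2 + s^2).
Proof.
  apply IMP_ext with (fun t => (m^2 * phi t + (2*m*s) * (phi t * t)) + s^2 * (phi t * (t*t))).
  intro; ring.
  replace (m^2 + s^2) with ((m^2 * 1 + 2*m*s*0) + s^2 * 1) by ring.
  apply IMP_plus. apply IMP_plus. apply IMP_scal, IMP_phi. apply IMP_scal, IMP_m1. apply IMP_scal, IMP_m2.
Qed.

Lemma al_close m : Rabs (al m - m^2) <= s^2 * (1 + T).
Proof.
  pose proof mu0_bounds.
  set (r := fun t => pos_part (- ((m + s*t)^2 - s^2*T))).
  assert (Hr : IMP (fun t => phi t * r t) (al m - (m^2 + s^2 - s^2*T - mu0))).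
  { apply IMP_ext with (fun t => phi t * Uf m t + (-1) * (phi t * (m + s*t)^2) + (s^2*T + mu0) * phi t).
    intro t. unfold Uf, r. rewrite (pos_part_split ((m + s*t)^2 - s^2*T)). ring.
    replace (al m - (m ^ 2 + s ^ 2 - s ^ 2 * T - mu0)) with (al m + (-1) * (m^2+s^2) + (s^2*T+mu0)*1) by ring.
    apply IMP_plus. apply IMP_plus. apply al_spec. apply IMP_scal, IMP_Y2. apply IMP_scal, IMP_phi. }
  assert (0 <= al m - (m^2 + s^2 - s^2*T - mu0)).
  { apply (IMP_le (fun _ => 0) (fun t => phi t * r t)). intro t. pose proof (phi_pos t).
    pose proof (pos_part_ge0 (- ((m + s*t)^2 - s^2*T))). unfold r; nra. apply IMP_zero. auto. }
  assert (al m - (m^2 + s^2 - s^2*T - mu0) <= s^2*T).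
  { apply (IMP_le (fun t => phi t * r t) (fun t => (s^2*T) * phi t)). intro t. pose proof (phi_pos t).
    assert (r t <= s^2*T). { unfold r, pos_part. apply Rmax_lub. pose proof (pow2_ge_0 (m+s*t)). nra. apply Rmult_le_pos; nra. }
    nra. auto. assert (H1 := IMP_scal _ (s^2*T) _ IMP_phi). replace (s^2*T*1) with (s^2*T) in H1 by ring. exact H1. }
  unfold Rabs; destruct (Rcase_abs (al m - m^2)); nra.
Qed.

Lemma var_le m c W w : (forall t, (Uf m t - c)^2 <= W t) -> IMP (fun t => phi t * W t) w ->
  s2 m - al m ^ 2 <= w.
Proof.
  intros HW Hw.
  assert (E : IMP (fun t => phi t * (Uf m t - c)^2) (s2 m - 2*c*al m + c^2)).
  { apply IMP_ext with (fun t => phi t * (Uf m t * Uf m t) + (- 2 * c) * (phi t * Uf m t) + c^2 * phi t).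
    intro; ring.
    replace (s2 m - 2*c*al m + c^2) with (s2 m + (-2*c) * al m + c^2 * 1) by ring.
    apply IMP_plus. apply IMP_plus. apply s2_spec. apply IMP_scal, al_spec. apply IMP_scal, IMP_phi. }
  assert (s2 m - 2*c*al m + c^2 <= w).
  { apply (IMP_le _ _ _ _ (fun t => Rmult_le_compat_l _ _ _ (Rlt_le _ _ (phi_pos t)) (HW t)) E Hw). }
  assert (0 <= (al m - c)^2) by apply pow2_ge_0. nra.
Qed.

Lemma var_nonneg m : 0 <= s2 m - al m ^ 2.
Proof.
  assert (E : IMP (fun t => phi t * (Uf m t - al m)^2) (s2 m - al m ^ 2)).
  { apply IMP_ext with (fun t => phi t * (Uf m t * Uf m t) + (- 2 * al m) * (phi t * Uf m t) + al m^2 * phi t).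
    intro; ring.
    replace (s2 m - al m ^ 2) with (s2 m + (-2*al m) * al m + al m^2 * 1) by ring.
    apply IMP_plus. apply IMP_plus. apply s2_spec. apply IMP_scal, al_spec. apply IMP_scal, IMP_phi. }
  apply (IMP_le (fun _ => 0) _ _ _ (fun t => Rmult_le_pos _ _ (Rlt_le _ _ (phi_pos t)) (pow2_ge_0 (Uf m t - al m))) IMP_zero E).
Qed.

Definition Vb (m : R) := 3 * (4 * m^2 * s^2 + 3 * s^4 + s^4 * T^2).

Lemma var_bound m : s2 m - al m ^ 2 <= Vb m.
Proof.
  pose proof mu0_bounds.
  apply (var_le m (m^2 - s^2*T - mu0) (fun t => 3 * ((4*m^2*s^2) * (t*t) + s^4 * (t*t*t*t) + s^4*T^2))).
  - intro t. unfold Uf. rewrite (pos_part_split ((m + s*t)^2 - s^2*T)).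
    set (r := pos_part (- ((m + s * t) ^ 2 - s ^ 2 * T))).
    assert (0 <= r) by apply pos_part_ge0.
    assert (r <= s^2*T). { unfold r, pos_part. apply Rmax_lub. pose proof (pow2_ge_0 (m+s*t)). nra. apply Rmult_le_pos; nra. }
    replace ((m + s * t) ^ 2 - s ^ 2 * T + r - mu0 - (m ^ 2 - s ^ 2 * T - mu0)) with
      ((2*m*s*t) + (s^2 * (t*t)) + r) by ring.
    assert (r^2 <= s^4 * T^2) by nra.
    assert (((2*m*s*t) + (s^2 * (t*t)) + r)^2 <= 3 * ((2*m*s*t)^2 + (s^2*(t*t))^2 + r^2)).
    { assert (0 <= (2*m*s*t - s^2*(t*t))^2) by apply pow2_ge_0.
      assert (0 <= (2*m*s*t - r)^2) by apply pow2_ge_0.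
      assert (0 <= (s^2*(t*t) - r)^2) by apply pow2_ge_0. nra. }
    nra.
  - unfold Vb. apply IMP_ext with (fun t => (3*(4*m^2*s^2)) * (phi t * (t*t)) + (3*s^4) * (phi t * (t*t*t*t)) + (3*s^4*T^2) * phi t).
    intro; ring.
    replace (3 * (4 * m ^ 2 * s ^ 2 + 3 * s ^ 4 + s ^ 4 * T ^ 2)) with
      (3*(4*m^2*s^2) * 1 + 3*s^4 * 3 + 3*s^4*T^2 * 1) by ring.
    apply IMP_plus. apply IMP_plus. apply IMP_scal, IMP_m2. apply IMP_scal, IMP_m4. apply IMP_scal, IMP_phi.
Qed.

End Coord.

Lemma pp_sq_exp lam y : 0 < lam -> pos_part y ^ 2 <= (4 / lam^2) * exp (lam * y).
Proof.
  intros Hl. unfold pos_part, Rmax. destruct (Rle_dec y 0).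
  - pose proof (exp_pos (lam*y)). assert (0 < 4/lam^2) by (apply Rdiv_lt_0_compat; nra). apply Rle_trans with 0. simpl; nra. apply Rlt_le, Rmult_lt_0_compat; auto.
  - pose proof (exp_ge_sq (lam*y)). assert (0 <= lam*y) by nra. specialize (H H0).
    apply Rle_trans with (4 / lam^2 * ((1 + lam*y/2)^2)).
    + replace (4 / lam^2 * (1 + lam*y/2)^2) with ((2/lam + y)^2) by (field; lra).
      assert (0 < 2/lam) by (apply Rdiv_lt_0_compat; lra). simpl; nra.
    + apply Rmult_le_compat_l. apply Rlt_le, Rdiv_lt_0_compat; nra. auto.
Qed.

Section Cher.
Variable ep : R.
Hypothesis ep_pos : 0 < ep.
Hypothesis ep_lt1 : ep < 1.

Definition lam := (1 - ep) / 2.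

Lemma lam_pos : 0 < lam.
Proof. unfold lam; lra. Qed.

Lemma Llam_ex : exists L, IMP (fun t => phi t * exp (lam * (t*t))) L.
Proof.
  apply (IMP_exist _ (exp (1 / (2*ep)) / sqrt (2*PI))).
  - intro t. apply dcont. unfold phi. auto_derive. pose proof sqrt2pi_pos; lra.
  - intro t. pose proof sqrt2pi_pos. unfold phi, ea.
    rewrite Rabs_right. 2:{ apply Rle_ge, Rmult_le_pos. apply Rlt_le, Rdiv_lt_0_compat; auto. apply exp_pos. apply Rlt_le, exp_pos. }
    replace (exp (- (t * t) / 2) / sqrt (2 * PI) * exp (lam * (t * t))) with (exp (- (t*t)/2 + lam * (t*t)) / sqrt (2*PI))
      by (rewrite exp_plus; field; lra).
    replace (exp (1 / (2 * ep)) / sqrt (2 * PI) * exp (- Rabs t)) with (exp (1 / (2*ep) + - Rabs t) / sqrt (2*PI))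
      by (rewrite exp_plus; field; lra).
    unfold Rdiv at 1 3. apply Rmult_le_compat_r. apply Rlt_le, Rinv_0_lt_compat; lra.
    destruct (Req_dec (- (t * t) / 2 + lam * (t * t)) (1 / (2 * ep) + - Rabs t)) as [E|E]. rewrite E; lra.
    apply Rlt_le, exp_increasing.
    assert (Ha : Rabs t * Rabs t = t * t) by (rewrite <- Rabs_mult; apply Rabs_right; nra).
    assert (0 <= (Rabs t - 1/ep)^2) by apply pow2_ge_0.
    assert (e2 : - (t * t) / 2 + lam * (t * t) = - ep * (t*t) / 2) by (unfold lam; field).
    rewrite e2.
    assert (ep * (Rabs t - 1/ep)^2 = ep * (t*t) - 2 * Rabs t + 1/ep) by (rewrite <- Ha; field; lra).
    assert (0 <= ep * (Rabs t - 1/ep)^2) by (apply Rmult_le_pos; lra).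
    assert (1 / (2*ep) = (1/ep)/2) by (field; lra). lra.
Qed.

Definition Llam := EV (fun t => exp (lam * (t*t))).

Lemma Llam_spec : IMP (fun t => phi t * exp (lam * (t*t))) Llam.
Proof. apply EV_spec, Llam_ex. Qed.

Variables s T mu0 : R.
Hypothesis s_pos : 0 < s.
Hypothesis T_nonneg : 0 <= T.
Hypothesis Hmu0 : IMP (fun t => phi t * pos_part ((s*t)^2 - s^2*T)) mu0.

Definition M0 := s^4 * (4 / lam^2) * Llam * exp (- lam * T).

Lemma var0_bound : s2 s T mu0 0 - al s T mu0 0 ^ 2 <= M0.
Proof.
  pose proof lam_pos.
  apply (var_le s T mu0 T_nonneg 0 (- mu0)
    (fun t => (s^4 * (4 / lam^2) * exp (- lam * T)) * exp (lam * (t*t)))).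
  - intro t. unfold Uf. replace (pos_part ((0 + s * t) ^ 2 - s ^ 2 * T) - mu0 - - mu0)
      with (pos_part ((0 + s * t) ^ 2 - s ^ 2 * T)) by ring.
    replace ((0 + s * t) ^ 2 - s ^ 2 * T) with (s^2 * (t*t - T)) by ring.
    assert (pos_part (s^2 * (t*t - T)) = s^2 * pos_part (t*t - T)).
    { unfold pos_part, Rmax. destruct (Rle_dec (s ^ 2 * (t * t - T)) 0), (Rle_dec (t*t - T) 0); nra. }
    rewrite H0. pose proof (pp_sq_exp lam (t*t - T) H).
    replace (s ^ 4 * (4 / lam ^ 2) * exp (- lam * T) * exp (lam * (t * t))) with
      (s^4 * (4 / lam^2 * exp (lam * (t*t - T)))).
    2:{ replace (lam * (t*t - T)) with (- lam * T + lam * (t*t)) by ring. rewrite exp_plus. ring. }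
    replace ((s ^ 2 * pos_part (t * t - T)) ^ 2) with (s^4 * pos_part (t*t - T) ^ 2) by ring.
    apply Rmult_le_compat_l. nra. auto.
  - unfold M0. replace (s ^ 4 * (4 / lam ^ 2) * Llam * exp (- lam * T)) with
      ((s ^ 4 * (4 / lam ^ 2) * exp (- lam * T)) * Llam) by ring.
    apply IMP_ext with (fun t => (s ^ 4 * (4 / lam ^ 2) * exp (- lam * T)) * (phi t * exp (lam * (t*t)))).
    intro; ring. apply IMP_scal, Llam_spec.
Qed.

Lemma Llam_pos : 0 <= Llam.
Proof.
  apply (IMP_le (fun _ => 0) _ _ _ (fun t => Rmult_le_pos _ _ (Rlt_le _ _ (phi_pos t)) (Rlt_le _ _ (exp_pos _))) IMP_zero Llam_spec).
Qed.

End Cher.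

Lemma prod2 m g p q : p <> q -> (forall j, (j < m)%nat -> j <> p -> j <> q -> g j = 1) ->
  rprod m g = (if Nat.ltb p m then g p else 1) * (if Nat.ltb q m then g q else 1).
Proof.
  intros Hpq. induction m; intros Hg.
  - simpl. ring.
  - simpl. rewrite IHm by (intros; apply Hg; lia).
    destruct (Nat.eq_dec m p) as [->|Hp].
    + destruct (Nat.ltb_spec p (S p)); try lia. destruct (Nat.ltb_spec p p); try lia.
      destruct (Nat.ltb_spec q (S p)), (Nat.ltb_spec q p); try lia; ring.
    + destruct (Nat.eq_dec m q) as [->|Hq].
      * destruct (Nat.ltb_spec q (S q)); try lia. destruct (Nat.ltb_spec q q); try lia.
        destruct (Nat.ltb_spec p (S q)), (Nat.ltb_spec p q); try lia; ring.
      * rewrite (Hg m) by lia.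
        destruct (Nat.ltb_spec p (S m)), (Nat.ltb_spec p m); try lia;
        destruct (Nat.ltb_spec q (S m)), (Nat.ltb_spec q m); try lia; ring.
Qed.

Lemma rprod_one m g : (forall j, (j < m)%nat -> g j = 1) -> rprod m g = 1.
Proof. induction m; intros Hg; simpl. auto. rewrite IHm, Hg by (try intros; try apply Hg; lia). ring. Qed.

Lemma sq_rsum N h : (rsum N h)^2 = rsum N (fun i => rsum N (fun i' => h i * h i')).
Proof.
  replace ((rsum N h)^2) with (rsum N h * rsum N h) by ring.
  rewrite <- rsum_scal. apply rsum_ext; intros. rewrite Rmult_comm, <- rsum_scal.
  apply rsum_ext; intros. ring.
Qed.

Lemma rsum_delta N i x : (i < N)%nat -> rsum N (fun i' => if Nat.eqb i i' then x else 0) = x.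
Proof.
  induction N; intros Hi. lia. rewrite rsum_S.
  destruct (Nat.eq_dec i N) as [->|Hn].
  - rewrite Nat.eqb_refl. rewrite (rsum_ext N _ (fun _ => 0)). 
    + assert (Z : forall M, rsum M (fun _ => 0) = 0) by (induction M; [reflexivity| rewrite rsum_S, IHM; ring]).
      rewrite Z. ring.
    + intros j Hj. destruct (Nat.eqb_spec N j); try lia; auto.
  - rewrite IHN by lia. destruct (Nat.eqb_spec i N); try lia. ring.
Qed.

Lemma double_sum N (a P D : nat -> R) :
  rsum N (fun i => rsum N (fun i' => a i * a i' * (if Nat.eqb i i' then D i else P i * P i'))) =
  (rsum N (fun i => a i * P i))^2 + rsum N (fun i => a i ^ 2 * (D i - P i ^ 2)).
Proof.
  rewrite sq_rsum, <- rsum_plus. apply rsum_ext; intros i Hi.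
  rewrite <- (rsum_delta N i (a i ^ 2 * (D i - P i ^ 2))) by auto.
  rewrite <- rsum_plus. apply rsum_ext; intros i' _.
  destruct (Nat.eqb_spec i i'). subst. ring. ring.
Qed.

Section Struct.
Variable n : nat.
Hypothesis n_pos : (0 < n)%nat.
Variables Ua Va : nat -> R -> R.
Variables al_ be_ s2a s2b : nat -> R.
Variable Qv : R.
Hypothesis Ua_nice : forall i, nice (Ua i).
Hypothesis Va_nice : forall i, nice (Va i).
Hypothesis Ua1 : forall i, IMP (fun t => phi t * Ua i t) (al_ i).
Hypothesis Va1 : forall i, IMP (fun t => phi t * Va i t) (be_ i).
Hypothesis Ua2 : forall i, IMP (fun t => phi t * (Ua i t * Ua i t)) (s2a i).
Hypothesis Va2 : forall i, IMP (fun t => phi t * (Va i t * Va i t)) (s2b i).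

Definition fi (i j : nat) (t : R) : R :=
  if Nat.ltb i n then (if Nat.eqb j i then Ua i t else if Nat.eqb j (n + i) then Va i t else 1) else 1.

Definition aa (i : nat) : R := if Nat.ltb i n then / INR n else - Qv.

Lemma fi_nice i j : nice (fi i j).
Proof.
  unfold fi. destruct (Nat.ltb i n). destruct (Nat.eqb j i). apply Ua_nice.
  destruct (Nat.eqb j (n+i)). apply Va_nice. apply nice_one. apply nice_one.
Qed.

Lemma EV_1 g : (forall t, g t = 1) -> EV g = 1.
Proof. intro H. apply EV_eq. apply IMP_ext with phi. intro; rewrite H; ring. apply IMP_phi. Qed.

Lemma fi_other i j : (j <> i)%nat -> (j <> n + i)%nat -> forall t, fi i j t = 1.
Proof.
  intros H1 H2 t. unfold fi. destruct (Nat.ltb i n); auto.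
  destruct (Nat.eqb_spec j i); try lia. destruct (Nat.eqb_spec j (n+i)); try lia. auto.
Qed.

Lemma fi_ge i j : (n <= i)%nat -> forall t, fi i j t = 1.
Proof. intros H t. unfold fi. destruct (Nat.ltb_spec i n); try lia. auto. Qed.

Lemma fi_one_side i i' j : i <> i' -> (forall t, fi i j t = 1) \/ (forall t, fi i' j t = 1).
Proof.
  intros Hii. destruct (Nat.le_gt_cases n i). left; apply fi_ge; auto.
  destruct (Nat.le_gt_cases n i'). right; apply fi_ge; auto.
  destruct (Nat.eq_dec j i) as [->|H1].
  - right. apply fi_other; lia.
  - destruct (Nat.eq_dec j (n+i)) as [->|H2].
    + right. apply fi_other; lia.
    + left. apply fi_other; lia.
Qed.

Definition ee (i i' j : nat) : R :=
  if Nat.eqb i i' then EV (fun t => fi i j t * fi i j t) else EV (fi i j) * EV (fi i' j).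

Lemma ee_spec i i' j : IMP (fun t => phi t * (fi i j t * fi i' j t)) (ee i i' j).
Proof.
  unfold ee. destruct (Nat.eqb_spec i i').
  - subst. apply EV_spec, nice_prod; apply fi_nice.
  - destruct (fi_one_side i i' j n0) as [H|H].
    + rewrite (EV_1 _ H). apply IMP_ext with (fun t => phi t * fi i' j t). intro; rewrite H; ring.
      rewrite Rmult_1_l. apply EV_spec, nice_ex, fi_nice.
    + rewrite (EV_1 _ H). apply IMP_ext with (fun t => phi t * fi i j t). intro; rewrite H; ring.
      rewrite Rmult_1_r. apply EV_spec, nice_ex, fi_nice.
Qed.

Definition PP i := if Nat.ltb i n then al_ i * be_ i else 1.
Definition DD i := if Nat.ltb i n then s2a i * s2b i else 1.

Lemma prod_fi i z : rprod (2*n) (fun j => fi i j (z j)) = if Nat.ltb i n then Ua i (z i) * Va i (z (n+i)%nat) else 1.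
Proof.
  destruct (Nat.ltb_spec i n).
  - rewrite (prod2 _ _ i (n+i)) by (try lia; intros; apply fi_other; lia).
    destruct (Nat.ltb_spec i (2*n)); try lia. destruct (Nat.ltb_spec (n+i) (2*n)); try lia.
    unfold fi. destruct (Nat.ltb_spec i n); try lia. rewrite Nat.eqb_refl.
    destruct (Nat.eqb_spec (n+i) i); try lia. rewrite Nat.eqb_refl. auto.
  - apply rprod_one. intros; apply fi_ge; lia.
Qed.

Lemma prod_ee_diag i : rprod (2*n) (ee i i) = DD i.
Proof.
  unfold DD. rewrite (rprod_ext _ _ (fun j => EV (fun t => fi i j t * fi i j t))).
  2:{ intros; unfold ee; rewrite Nat.eqb_refl; auto. }
  destruct (Nat.ltb_spec i n).
  - rewrite (prod2 _ _ i (n+i)). 2: lia.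
    2:{ intros j _ H1 H2. apply EV_1. intro t. rewrite fi_other by lia. ring. }
    destruct (Nat.ltb_spec i (2*n)); try lia. destruct (Nat.ltb_spec (n+i) (2*n)); try lia.
    f_equal.
    + apply EV_eq. apply IMP_ext with (2 := Ua2 i). intro t. unfold fi.
      destruct (Nat.ltb_spec i n); try lia. rewrite Nat.eqb_refl. auto.
    + apply EV_eq. apply IMP_ext with (2 := Va2 i). intro t. unfold fi.
      destruct (Nat.ltb_spec i n); try lia. destruct (Nat.eqb_spec (n+i) i); try lia. rewrite Nat.eqb_refl. auto.
  - apply rprod_one. intros. apply EV_1. intro; rewrite fi_ge by lia. ring.
Qed.

Lemma prod_EV i : rprod (2*n) (fun j => EV (fi i j)) = PP i.
Proof.
  unfold PP. destruct (Nat.ltb_spec i n).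
  - rewrite (prod2 _ _ i (n+i)). 2: lia.
    2:{ intros j _ H1 H2. apply EV_1. intro t. apply fi_other; lia. }
    destruct (Nat.ltb_spec i (2*n)); try lia. destruct (Nat.ltb_spec (n+i) (2*n)); try lia.
    f_equal.
    + apply EV_eq. apply IMP_ext with (2 := Ua1 i). intro t. unfold fi.
      destruct (Nat.ltb_spec i n); try lia. rewrite Nat.eqb_refl. auto.
    + apply EV_eq. apply IMP_ext with (2 := Va1 i). intro t. unfold fi.
      destruct (Nat.ltb_spec i n); try lia. destruct (Nat.eqb_spec (n+i) i); try lia. rewrite Nat.eqb_refl. auto.
  - apply rprod_one. intros. apply EV_1. intro; rewrite fi_ge by lia. auto.
Qed.

Lemma prod_ee i i' : rprod (2*n) (ee i i') = if Nat.eqb i i' then DD i else PP i * PP i'.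
Proof.
  destruct (Nat.eqb_spec i i').
  - subst. apply prod_ee_diag.
  - rewrite (rprod_ext _ _ (fun j => EV (fi i j) * EV (fi i' j))).
    rewrite rprod_mult, !prod_EV. auto.
    intros; unfold ee. destruct (Nat.eqb_spec i i'); try lia. auto.
Qed.

Theorem EF_formula : gauss_exp (2*n)
  (fun z => (/ INR n * rsum n (fun i => Ua i (z i) * Va i (z (n+i)%nat)) - Qv)^2)
  ((/ INR n * rsum n (fun i => al_ i * be_ i) - Qv)^2 +
    rsum n (fun i => (/ INR n)^2 * (s2a i * s2b i - (al_ i * be_ i)^2))).
Proof.
  assert (Lval : rsum (S n) (fun i => rsum (S n) (fun i' => aa i * aa i' * rprod (2*n) (ee i i'))) =
    ((/ INR n * rsum n (fun i => al_ i * be_ i) - Qv)^2 +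
    rsum n (fun i => (/ INR n)^2 * (s2a i * s2b i - (al_ i * be_ i)^2)))).
  { rewrite (rsum_ext _ _ (fun i => rsum (S n) (fun i' => aa i * aa i' * (if Nat.eqb i i' then DD i else PP i * PP i')))).
    2:{ intros; apply rsum_ext; intros; rewrite prod_ee; auto. }
    rewrite double_sum. rewrite !rsum_S.
    unfold aa at 2 4. unfold PP at 2 4. unfold DD at 2. destruct (Nat.ltb_spec n n); try lia.
    rewrite <- rsum_scal.
    rewrite (rsum_ext n (fun i => aa i * PP i) (fun i => / INR n * (al_ i * be_ i))).
    rewrite (rsum_ext n (fun i => aa i ^ 2 * (DD i - PP i ^ 2)) (fun i => (/ INR n)^2 * (s2a i * s2b i - (al_ i * be_ i)^2))).
    ring.
    + intros i Hi. unfold aa, DD, PP. destruct (Nat.ltb_spec i n); try lia. ring.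
    + intros i Hi. unfold aa, PP. destruct (Nat.ltb_spec i n); try lia. ring. }
  rewrite <- Lval.
  apply (gexp_sop (2*n) (S n) (fun i i' => aa i * aa i') (fun i i' j t => fi i j t * fi i' j t) ee).
  + intro z. cbv beta.
    transitivity ((rsum (S n) (fun i => aa i * rprod (2*n) (fun j => fi i j (z j)))) ^ 2).
    2:{ rewrite sq_rsum. apply rsum_ext; intros; apply rsum_ext; intros. rewrite rprod_mult. ring. }
    f_equal. rewrite rsum_S. unfold aa at 2.
    destruct (Nat.ltb_spec n n); try lia. rewrite prod_fi. destruct (Nat.ltb_spec n n); try lia.
    rewrite <- rsum_scal. rewrite (rsum_ext n (fun i => / INR n * (Ua i (z i) * Va i (z (n + i)%nat)))
       (fun i => aa i * rprod (2 * n) (fun j => fi i j (z j)))). ring.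
    intros i Hi. unfold aa. rewrite prod_fi. destruct (Nat.ltb_spec i n); try lia. auto.
  + intros; apply ee_spec.
Qed.

End Struct.

Definition ind (x : R) : R := if Req_EM_T x 0 then 0 else 1.

Lemma nnz_S n v : nnz (S n) v = (nnz n v + (if Req_EM_T (v n) 0 then 0 else 1))%nat.
Proof.
  unfold nnz. rewrite seq_S, filter_app, length_app. simpl.
  destruct (Req_EM_T (v n) 0); simpl; lia.
Qed.

Lemma rsum_ind n v : rsum n (fun i => ind (v i)) = INR (nnz n v).
Proof.
  induction n. reflexivity. rewrite rsum_S, nnz_S, plus_INR, IHn. unfold ind.
  destruct (Req_EM_T (v n) 0); simpl; ring.
Qed.

Lemma rsum_const n c : rsum n (fun _ => c) = INR n * c.
Proof. induction n. simpl; unfold rsum; simpl; ring. rewrite rsum_S, IHn, S_INR. ring. Qed.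

Lemma rsum_le n f g : (forall i, (i < n)%nat -> f i <= g i) -> rsum n f <= rsum n g.
Proof. induction n; intros H. unfold rsum; simpl; lra. rewrite !rsum_S. apply Rplus_le_compat. apply IHn; intros; apply H; lia. apply H; lia. Qed.

Lemma rsum_abs_le n h : Rabs (rsum n h) <= rsum n (fun i => Rabs (h i)).
Proof. induction n. unfold rsum; simpl; rewrite Rabs_R0; lra. rewrite !rsum_S. eapply Rle_trans. apply Rabs_triang. lra. Qed.

Lemma count_bound n h v K : (forall i, (i < n)%nat -> v i = 0 -> h i = 0) ->
  (forall i, (i < n)%nat -> Rabs (h i) <= K) -> Rabs (rsum n h) <= K * INR (nnz n v).
Proof.
  intros H0 HK. eapply Rle_trans. apply rsum_abs_le. rewrite <- rsum_ind, <- rsum_scal.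
  apply rsum_le. intros i Hi. unfold ind. destruct (Req_EM_T (v i) 0).
  rewrite H0 by auto. rewrite Rabs_R0; lra. rewrite Rmult_1_r; auto.
Qed.

Lemma ind_nonneg x : 0 <= ind x.
Proof. unfold ind; destruct (Req_EM_T x 0); lra. Qed.

Lemma coord_alg (m th a b v w P R V M0 : R) :
  Rabs m <= P -> Rabs th <= P -> Rabs (a - m^2) <= R -> Rabs (b - th^2) <= R -> 0 <= R -> 0 <= M0 ->
  0 <= v <= V -> 0 <= w <= V ->
  (m = 0 -> a = 0 /\ v <= M0) -> (th = 0 -> b = 0 /\ w <= M0) ->
  (v + a^2) * (w + b^2) - a^2 * b^2 <=
    M0^2 + M0 * (V + (P^2 + R)^2) * (ind m + ind th) +
    (V^2 + 2 * V * (P^2 + R)^2) * ind (m * th).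
Proof.
  intros Hm Ht Ha Hb HR HM Hv Hw Hm0 Ht0.
  assert (Sa : a^2 <= (P^2 + R)^2).
  { assert (m^2 <= P^2). { pose proof (Rabs_pos m). rewrite <- (pow2_abs m). nra. }
    unfold Rabs in Ha. destruct (Rcase_abs (a - m^2)); pose proof (pow2_ge_0 m); nra. }
  assert (Sb : b^2 <= (P^2 + R)^2).
  { assert (th^2 <= P^2). { pose proof (Rabs_pos th). rewrite <- (pow2_abs th). nra. }
    unfold Rabs in Hb. destruct (Rcase_abs (b - th^2)); pose proof (pow2_ge_0 th); nra. }
  pose proof (pow2_ge_0 a). pose proof (pow2_ge_0 b).
  set (B := (P^2+R)^2) in *.
  replace ((v + a^2) * (w + b^2) - a^2 * b^2) with (v * w + v * b^2 + w * a^2) by ring.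
  assert (0 <= B) by (unfold B; apply pow2_ge_0).
  unfold ind. destruct (Req_EM_T m 0) as [E1|E1]; destruct (Req_EM_T th 0) as [E2|E2];
    destruct (Req_EM_T (m*th) 0) as [E3|E3].
  - destruct (Hm0 E1) as [-> ?]. destruct (Ht0 E2) as [-> ?]. simpl. nra.
  - exfalso. apply E3. rewrite E1; ring.
  - destruct (Hm0 E1) as [-> ?]. simpl. nra.
  - exfalso. apply E3. rewrite E1; ring.
  - destruct (Ht0 E2) as [-> ?]. simpl. nra.
  - exfalso. apply E3. rewrite E2; ring.
  - exfalso. apply Rmult_integral in E3. tauto.
  - simpl. nra.
Qed.

Lemma bias_alg m th a b P R : Rabs m <= P -> Rabs th <= P -> Rabs (a - m^2) <= R -> Rabs (b - th^2) <= R -> 0 <= R ->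
  Rabs (a * b - m^2 * th^2) <= 2 * P^2 * R + R^2.
Proof.
  intros Hm Ht Ha Hb HR.
  assert (m^2 <= P^2) by (pose proof (Rabs_pos m); rewrite <- (pow2_abs m); nra).
  assert (th^2 <= P^2) by (pose proof (Rabs_pos th); rewrite <- (pow2_abs th); nra).
  pose proof (pow2_ge_0 m). pose proof (pow2_ge_0 th).
  replace (a * b - m^2 * th^2) with ((a - m^2) * b + m^2 * (b - th^2)) by ring.
  eapply Rle_trans. apply Rabs_triang. rewrite !Rabs_mult.
  rewrite (Rabs_right (m^2)) by lra.
  assert (Rabs b <= P^2 + R).
  { unfold Rabs in *. destruct (Rcase_abs b), (Rcase_abs (b - th^2)); lra. }
  pose proof (Rabs_pos (a - m^2)). pose proof (Rabs_pos (b - th^2)). pose proof (Rabs_pos b).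
  assert (Rabs (a - m^2) * Rabs b <= R * (P^2 + R)) by (apply Rmult_le_compat; lra).
  assert (m^2 * Rabs (b - th^2) <= P^2 * R) by (apply Rmult_le_compat; lra).
  lra.
Qed.

Section Asym.
Variables s p T : R.
Hypothesis s_pos : 0 < s.
Hypothesis p_ge1 : 1 <= p.
Hypothesis T_ge1 : 1 <= T.
Hypothesis T_le : T <= p^2.

Let R' := s^2 * (1 + T).
Let Vs := 3 * (4 * p^2 * s^2 + 3 * s^4 + s^4 * T^2).

Lemma R'_le : R' <= 2 * s^2 * T.
Proof. unfold R'. nra. Qed.

Lemma D_le : 2 * p^2 * R' + R'^2 <= (4*s^2 + 4*s^4) * p^2 * T.
Proof.
  pose proof R'_le. assert (0 <= R') by (unfold R'; nra).
  assert (R'^2 <= 4 * s^4 * T^2) by nra.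
  assert (s^4 * T^2 <= s^4 * (p^2 * T)) by (apply Rmult_le_compat_l; nra).
  nra.
Qed.

Lemma B1 : (p^2 + R')^2 <= (1 + 2*s^2)^2 * p^4.
Proof.
  pose proof R'_le. assert (0 <= R') by (unfold R'; nra).
  assert (p^2 + R' <= (1 + 2*s^2) * p^2) by nra.
  assert (0 <= p^2 + R') by nra.
  replace ((1 + 2 * s ^ 2) ^ 2 * p ^ 4) with (((1 + 2*s^2) * p^2)^2) by ring. 
  apply pow_incr; lra.
Qed.

Lemma Vs_le : Vs <= (12*s^2 + 12*s^4) * (p^2 + T^2).
Proof. unfold Vs. assert (1 <= p^2) by nra. assert (0 <= s^4) by nra. nra. Qed.

Lemma Bnd_le : Vs + (p^2 + R')^2 <= (2 * (12*s^2 + 12*s^4) + (1 + 2*s^2)^2) * p^4.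
Proof.
  pose proof B1. pose proof Vs_le.
  assert (p^2 <= p^4) by nra. assert (T^2 <= p^4) by nra.
  assert (0 <= 12*s^2 + 12*s^4) by nra.
  assert ((12*s^2 + 12*s^4) * (p^2 + T^2) <= (12*s^2 + 12*s^4) * (2 * p^4)) by (apply Rmult_le_compat_l; lra).
  nra.
Qed.

Lemma Bnd2_le : Vs^2 + 2 * Vs * (p^2 + R')^2 <=
  (2 * (12*s^2 + 12*s^4)^2 + 2 * (12*s^2+12*s^4) * (1 + 2*s^2)^2) * (p^6 + p^4 * T^2).
Proof.
  pose proof B1. pose proof Vs_le. set (cV := 12*s^2 + 12*s^4) in *. set (cR := (1+2*s^2)^2) in *.
  assert (0 <= cV) by (unfold cV; nra). assert (0 <= cR) by (unfold cR; apply pow2_ge_0).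
  assert (0 <= Vs) by (unfold Vs; nra).
  assert (1 <= p^2) by nra. assert (0 <= p^4) by (apply pow_le; lra).
  assert (p^4 <= p^6) by (replace (p^6) with (p^4*p^2) by ring; nra).
  assert (T^2 <= p^4) by (replace (p^4) with (p^2*p^2) by ring; replace (T^2) with (T*T) by ring; apply Rmult_le_compat; lra).
  assert (T^2 * T^2 <= p^4 * T^2) by (apply Rmult_le_compat_r; [apply pow2_ge_0|lra]).
  assert (Vs^2 <= cV^2 * (p^2 + T^2)^2).
  { replace (cV^2 * (p^2+T^2)^2) with ((cV * (p^2+T^2))^2) by ring. apply pow_incr; lra. }
  assert ((p^2 + T^2)^2 <= 2 * (p^6 + p^4 * T^2)) by nra.
  assert (Vs * (p^2 + R')^2 <= cV * (p^2 + T^2) * (cR * p^4)).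
  { apply Rmult_le_compat; try lra. apply pow2_ge_0. }
  assert (cV^2 * (p^2+T^2)^2 <= cV^2 * (2 * (p^6 + p^4 * T^2))) by (apply Rmult_le_compat_l; nra).
  assert (cV * (p^2 + T^2) * (cR * p^4) = cV * cR * (p^6 + p^4 * T^2)) by ring.
  nra.
Qed.

End Asym.

Lemma expM a c : exp a * exp c = exp (a + c).
Proof. rewrite exp_plus; auto. Qed.

Lemma expV a : / exp a = exp (- a).
Proof. rewrite exp_Ropp; auto. Qed.

Lemma exp_mono a c : a <= c -> exp a <= exp c.
Proof. intros H. destruct (Req_dec a c). subst; lra. apply Rlt_le, exp_increasing; lra. Qed.

Lemma exp_sq a : exp a ^ 2 = exp (2 * a).
Proof. simpl. rewrite Rmult_1_r, expM. f_equal; ring. Qed.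

Lemma exp_p4 a : exp a ^ 4 = exp (4 * a).
Proof. replace (exp a ^ 4) with (exp a ^ 2 * exp a ^ 2) by ring. rewrite exp_sq, expM. f_equal; ring. Qed.

Lemma exp_p6 a : exp a ^ 6 = exp (6 * a).
Proof. replace (exp a ^ 6) with (exp a ^ 4 * exp a ^ 2) by ring. rewrite exp_sq, exp_p4, expM. f_equal; ring. Qed.

Section Final.
Variables ep be b T c0 cD cB c4 Nm Nt Nq D Bnd Bnd2 : R.
Hypothesis ep_pos : 0 < ep.
Hypothesis ep_be : ep <= be.
Hypothesis be_lt : be < 1/2.
Hypothesis b_pos : 0 < b.
Hypothesis T_pos : 0 <= T.
Hypothesis c0_pos : 0 <= c0.
Hypothesis cD_pos : 0 <= cD.
Hypothesis cB_pos : 0 <= cB.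
Hypothesis c4_pos : 0 <= c4.
Hypothesis HNm : 0 <= Nm <= exp (be * T).
Hypothesis HNt : 0 <= Nt <= exp (be * T).
Hypothesis HNq : 0 <= Nq <= exp (ep * T).
Hypothesis HD : 0 <= D <= cD * exp (b*T) ^ 2 * T.
Hypothesis HB : 0 <= Bnd <= cB * exp (b*T) ^ 4.
Hypothesis HB2 : 0 <= Bnd2 <= c4 * (exp (b*T) ^ 6 + exp (b*T) ^ 4 * T^2).

Let A := exp ((2*ep + 4*b - 2) * T) * T^2.
Let B := exp ((ep + 6*b - 2) * T).
Let lam' := (1 - ep) / 2.

Lemma t1 : (/ exp T * (D * Nq))^2 <= cD^2 * A.
Proof.
  unfold A. rewrite exp_sq in HD.
  assert (0 <= / exp T) by (apply Rlt_le, Rinv_0_lt_compat, exp_pos).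
  assert (/ exp T * (D * Nq) <= cD * T * exp ((2*b + ep - 1) * T)).
  { apply Rle_trans with (/ exp T * ((cD * exp (2 * (b*T)) * T) * exp (ep * T))).
    apply Rmult_le_compat_l; auto. apply Rmult_le_compat; lra.
    rewrite expV. replace (exp (- T) * (cD * exp (2 * (b * T)) * T * exp (ep * T))) with
      (cD * T * (exp (- T) * exp (2 * (b * T)) * exp (ep * T))) by ring.
    rewrite !expM. apply Req_le. f_equal. f_equal. ring. }
  assert (0 <= / exp T * (D * Nq)) by (apply Rmult_le_pos; [auto|apply Rmult_le_pos; lra]).
  apply Rle_trans with ((cD * T * exp ((2 * b + ep - 1) * T))^2). apply pow_incr; lra.
  replace ((cD * T * exp ((2 * b + ep - 1) * T)) ^ 2) with (cD^2 * T^2 * exp ((2 * b + ep - 1) * T)^2) by ring.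
  rewrite exp_sq. replace (2 * ((2 * b + ep - 1) * T)) with ((2 * ep + 4 * b - 2) * T) by ring. lra.
Qed.

Lemma t2 : (/ exp T)^2 * (exp T * (c0 * exp (- lam' * T))^2) <= c0^2 * B.
Proof.
  unfold B, lam'. replace ((/ exp T)^2 * (exp T * (c0 * exp (- ((1 - ep) / 2) * T))^2)) with
    (c0^2 * (/ exp T * / exp T * exp T * exp (- ((1 - ep) / 2) * T) ^ 2)) by ring.
  apply Rmult_le_compat_l. nra.
  rewrite exp_sq, !expV, !expM. apply exp_mono. nra.
Qed.

Lemma t3 : (/ exp T)^2 * (c0 * exp (- lam' * T) * Bnd * (Nm + Nt)) <= 2 * c0 * cB * B.
Proof.
  unfold B, lam'. rewrite exp_p4 in HB.
  assert (0 <= (/ exp T)^2) by (apply pow2_ge_0).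
  assert (0 <= c0 * exp (- ((1 - ep) / 2) * T)) by (apply Rmult_le_pos; [lra| apply Rlt_le, exp_pos]).
  apply Rle_trans with ((/ exp T)^2 * (c0 * exp (- ((1 - ep) / 2) * T) * (cB * exp (4 * (b * T))) * (2 * exp (be * T)))).
  - apply Rmult_le_compat_l; auto. apply Rmult_le_compat; try lra. apply Rmult_le_pos; lra.
    apply Rmult_le_compat_l; lra.
  - replace ((/ exp T) ^ 2 * (c0 * exp (- ((1 - ep) / 2) * T) * (cB * exp (4 * (b * T))) * (2 * exp (be * T))))
      with (2 * c0 * cB * (/ exp T * / exp T * exp (- ((1 - ep) / 2) * T) * exp (4 * (b * T)) * exp (be * T))) by ring.
    apply Rmult_le_compat_l. nra. rewrite !expV, !expM. apply exp_mono. nra.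
Qed.

Lemma t4 : (/ exp T)^2 * (Bnd2 * Nq) <= c4 * (B + A).
Proof.
  unfold A, B. rewrite exp_p4, exp_p6 in HB2.
  assert (0 <= (/ exp T)^2) by (apply pow2_ge_0).
  assert (0 <= exp (6 * (b * T)) + exp (4 * (b * T)) * T ^ 2) by (pose proof (exp_pos (6*(b*T))); pose proof (exp_pos (4*(b*T))); nra).
  apply Rle_trans with ((/ exp T)^2 * (c4 * (exp (6 * (b * T)) + exp (4 * (b * T)) * T ^ 2) * exp (ep * T))).
  - apply Rmult_le_compat_l; auto. apply Rmult_le_compat; lra.
  - replace ((/ exp T) ^ 2 * (c4 * (exp (6 * (b * T)) + exp (4 * (b * T)) * T ^ 2) * exp (ep * T))) with
      (c4 * ((/ exp T * / exp T * exp (6 * (b * T)) * exp (ep * T)) + (/ exp T * / exp T * exp (4 * (b * T)) * exp (ep * T)) * T^2)) by ring.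
    apply Rmult_le_compat_l; auto. rewrite !expV, !expM. apply Rplus_le_compat.
    apply exp_mono; nra. apply Rmult_le_compat_r. apply pow2_ge_0. apply exp_mono; nra.
Qed.

Lemma final_ineq : (/ exp T * (D * Nq))^2 + (/ exp T)^2 * (exp T * (c0 * exp (- lam' * T))^2 +
   c0 * exp (- lam' * T) * Bnd * (Nm + Nt) + Bnd2 * Nq) <=
   (cD^2 + c0^2 + 2 * c0 * cB + c4 + 1) * (A + B).
Proof.
  pose proof t1. pose proof t2. pose proof t3. pose proof t4.
  assert (0 <= A) by (unfold A; apply Rmult_le_pos; [apply Rlt_le, exp_pos| apply pow2_ge_0]).
  assert (0 <= B) by (unfold B; apply Rlt_le, exp_pos).
  assert (0 <= cD^2) by apply pow2_ge_0. assert (0 <= c0^2) by apply pow2_ge_0.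
  assert (0 <= c0 * cB) by (apply Rmult_le_pos; lra).
  nra.
Qed.

End Final.

Lemma sq_le_abs a c : Rabs a <= c -> a^2 <= c^2.
Proof. intros H. rewrite <- (pow2_abs a). pose proof (Rabs_pos a). apply pow_incr. lra. Qed.

Lemma rsum_minus n f g : rsum n f - rsum n g = rsum n (fun i => f i - g i).
Proof.
  replace (rsum n f - rsum n g) with (rsum n f + (-1) * rsum n g) by ring.
  rewrite <- rsum_scal, <- rsum_plus. apply rsum_ext; intros; ring.
Qed.

Theorem theorem1 (beta eps b sigma : R) :
  0 < eps -> eps <= beta -> beta < 1 / 2 -> 0 < b -> 0 < sigma ->
  exists C : R, 0 < C /\
  exists N : nat, forall n : nat, (N <= n)%nat ->
  forall mu0 : R,
    improper_int (fun z => phi z * pos_part ((sigma * z) ^ 2 - sigma ^ 2 * tau n)) mu0 ->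
  forall mu theta : nat -> R, Omega n beta eps b mu theta ->
    exists L : R,
      gauss_exp (2 * n)
        (fun z => (Qhat2 n sigma mu0 mu0 (obsX n sigma mu z) (obsY n sigma theta z)
                   - Qfun n mu theta) ^ 2) L /\
      L <= C * (Rpower (INR n) (2 * eps + 4 * b - 2) * (ln (INR n)) ^ 2
                + Rpower (INR n) (eps + 6 * b - 2)).
Proof.
  intros Heps Hepsbe Hbe Hb Hs.
  set (c0 := sigma^4 * (4 / lam eps ^2) * Llam eps).
  set (cD := 4*sigma^2 + 4*sigma^4).
  set (cB := 2 * (12 * sigma ^ 2 + 12 * sigma ^ 4) + (1 + 2 * sigma ^ 2) ^ 2).
  set (c4 := 2 * (12 * sigma ^ 2 + 12 * sigma ^ 4) ^ 2 + 2 * (12 * sigma ^ 2 + 12 * sigma ^ 4) * (1 + 2 * sigma ^ 2) ^ 2).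
  assert (c0p : 0 <= c0).
  { unfold c0. pose proof (Llam_pos eps Heps). assert (0 < lam eps) by (apply lam_pos; lra).
    apply Rmult_le_pos; auto. apply Rmult_le_pos. nra. apply Rlt_le, Rdiv_lt_0_compat; nra. }
  assert (cBp : 0 <= cB) by (unfold cB; pose proof (pow2_ge_0 (1 + 2 * sigma^2)); nra).
  assert (c4p : 0 <= c4) by (unfold c4; pose proof (pow2_ge_0 (1 + 2 * sigma^2)); pose proof (pow2_ge_0 (12 * sigma ^ 2 + 12 * sigma ^ 4)); nra).
  exists (cD^2 + c0^2 + 2 * c0 * cB + c4 + 1). split.
  { pose proof (pow2_ge_0 cD). pose proof (pow2_ge_0 c0). assert (0 <= c0 * cB) by (apply Rmult_le_pos; lra). lra. }
  destruct (INR_unbounded (exp (1 / b^2))) as [N1 HN1].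
  exists (max 3 N1). intros n Hn mu0 Hmu0 mu theta Hom.
  assert (n_pos : (0 < n)%nat) by lia.
  assert (xpos : 0 < INR n) by (apply lt_0_INR; lia).
  set (T := tau n).
  assert (ExpT : exp T = INR n) by (unfold T, tau; apply exp_ln; auto).
  assert (T1 : 1 <= T).
  { unfold T, tau. rewrite <- ln_exp with 1. apply ln_le. apply exp_pos.
    pose proof exp_le_3. assert (3 <= INR n). { replace 3 with (INR 3) by (simpl; ring). apply le_INR. lia. } lra. }
  assert (Tb : 1 / b^2 <= T).
  { unfold T, tau. rewrite <- (ln_exp (1/b^2)). apply ln_le. apply exp_pos.
    assert (INR N1 <= INR n) by (apply le_INR; lia). lra. }
  set (p := exp (b * T)).
  assert (p1 : 1 <= p). { unfold p. rewrite <- exp_0. apply exp_mono. nra. }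
  assert (Tp : T <= p^2).
  { unfold p. assert (1 + b*T <= exp (b*T)).
    { destruct (Req_dec (b*T) 0). rewrite H, exp_0; lra. apply Rlt_le, exp_ineq1; auto. }
    assert (1 <= b^2 * T). { apply Rmult_le_reg_r with (/ b^2). apply Rinv_0_lt_compat; nra.
      replace (b^2 * T * / b^2) with T by (field; lra). unfold Rdiv in Tb. lra. }
    assert (0 <= b*T) by nra. nra. }
  assert (T0 : 0 <= T) by lra.
  assert (Hm0 : IMP (fun t => phi t * pos_part ((sigma * t) ^ 2 - sigma ^ 2 * T)) mu0) by (apply improper_IMP; exact Hmu0).
  destruct Hom as [Hnm [Hmub [Hnt [Htb Hnq]]]].
  unfold Rpower in Hnm, Hnt, Hnq, Hmub, Htb. fold (tau n) in Hnm, Hnt, Hnq, Hmub, Htb. fold T in Hnm, Hnt, Hnq, Hmub, Htb.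
  fold p in Hmub, Htb.
  set (al_ := fun i => al sigma T mu0 (mu i)).
  set (be_ := fun i => al sigma T mu0 (theta i)).
  set (s2a := fun i => s2 sigma T mu0 (mu i)).
  set (s2b := fun i => s2 sigma T mu0 (theta i)).
  set (Q := Qfun n mu theta).
  exists ((/ INR n * rsum n (fun i => al_ i * be_ i) - Q)^2 +
    rsum n (fun i => (/ INR n)^2 * (s2a i * s2b i - (al_ i * be_ i)^2))).
  split.
  { eapply gauss_exp_ext; [| apply (EF_formula n n_pos (fun i => Uf sigma T mu0 (mu i)) (fun i => Uf sigma T mu0 (theta i)))].
    - intro z. unfold Qhat2, obsX, obsY, Uf, Q. fold T. reflexivity.
    - intro; apply Uf_nice; auto.
    - intro; apply Uf_nice; auto.
    - intro; apply al_spec; auto.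
    - intro; apply al_spec; auto.
    - intro; apply s2_spec; auto.
    - intro; apply s2_spec; auto. }
  set (R' := sigma^2 * (1 + T)).
  set (Vs := 3 * (4 * p^2 * sigma^2 + 3 * sigma^4 + sigma^4 * T^2)).
  set (M0v := M0 eps sigma T).
  set (Dv := 2 * p^2 * R' + R'^2).
  set (Bnd := Vs + (p^2 + R')^2).
  set (Bnd2 := Vs^2 + 2 * Vs * (p^2 + R')^2).
  set (Nm := INR (nnz n mu)). set (Nt := INR (nnz n theta)). set (Nq := INR (nnz n (fun i => mu i * theta i))).
  assert (R'p : 0 <= R') by (unfold R'; apply Rmult_le_pos; [apply pow2_ge_0| lra]).
  assert (M0e : M0v = c0 * exp (- ((1 - eps) / 2) * T)) by (unfold M0v, M0, c0, lam; ring).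
  assert (M0p : 0 <= M0v) by (rewrite M0e; apply Rmult_le_pos; [auto| apply Rlt_le, exp_pos]).
  assert (Vsp : 0 <= Vs).
  { unfold Vs. pose proof (pow2_ge_0 p). pose proof (pow2_ge_0 sigma). assert (0 <= sigma^4) by (apply pow_le; lra).
    assert (0 <= T^2) by apply pow2_ge_0. assert (0 <= p^2 * sigma^2) by (apply Rmult_le_pos; lra).
    assert (0 <= sigma^4 * T^2) by (apply Rmult_le_pos; lra). lra. }
  assert (Hbias : (/ INR n * rsum n (fun i => al_ i * be_ i) - Q)^2 <= (/ exp T * (Dv * Nq))^2).
  { apply sq_le_abs. rewrite ExpT.
    replace (/ INR n * rsum n (fun i => al_ i * be_ i) - Q) with
      (/ INR n * rsum n (fun i => al_ i * be_ i - mu i ^ 2 * theta i ^ 2))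
      by (unfold Q, Qfun; rewrite <- rsum_minus; ring).
    rewrite Rabs_mult, (Rabs_right (/ INR n)) by (apply Rle_ge, Rlt_le, Rinv_0_lt_compat; auto).
    apply Rmult_le_compat_l. apply Rlt_le, Rinv_0_lt_compat; auto.
    apply (count_bound n _ (fun i => mu i * theta i) Dv).
    - intros i Hi H0. apply Rmult_integral in H0. unfold al_, be_. destruct H0 as [E|E]; rewrite E.
      + rewrite al0 by auto. ring.
      + rewrite al0 by auto. ring.
    - intros i Hi. apply (bias_alg (mu i) (theta i) (al_ i) (be_ i) p R').
      apply Hmub; auto. apply Htb; auto. apply (al_close sigma T mu0 T0 Hm0). apply (al_close sigma T mu0 T0 Hm0). exact R'p. }
  assert (Hvar : rsum n (fun i => (/ INR n)^2 * (s2a i * s2b i - (al_ i * be_ i)^2)) <=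
     (/ exp T)^2 * (exp T * M0v^2 + M0v * Bnd * (Nm + Nt) + Bnd2 * Nq)).
  { rewrite rsum_scal, ExpT. apply Rmult_le_compat_l. apply pow2_ge_0.
    apply Rle_trans with (rsum n (fun i => M0v^2 + M0v * Bnd * (ind (mu i) + ind (theta i)) + Bnd2 * ind (mu i * theta i))).
    - apply rsum_le. intros i Hi.
      replace (s2a i * s2b i - (al_ i * be_ i) ^ 2) with
        (((s2a i - al_ i^2) + al_ i^2) * ((s2b i - be_ i^2) + be_ i^2) - al_ i^2 * be_ i^2) by ring.
      unfold Bnd, Bnd2.
      assert (Vm : forall m, Rabs m <= p -> s2 sigma T mu0 m - al sigma T mu0 m ^ 2 <= Vs).
      { intros m Hm. eapply Rle_trans. apply (var_bound sigma T mu0 T0 Hm0). unfold Vb, Vs.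
        assert (m^2 <= p^2) by (pose proof (Rabs_pos m); rewrite <- (pow2_abs m); apply pow_incr; lra).
        assert (m^2 * sigma^2 <= p^2 * sigma^2) by (apply Rmult_le_compat_r; [apply pow2_ge_0|lra]). lra. }
      apply (coord_alg (mu i) (theta i) (al_ i) (be_ i) (s2a i - al_ i^2) (s2b i - be_ i^2) p R' Vs M0v).
      + apply Hmub; auto.
      + apply Htb; auto.
      + apply (al_close sigma T mu0 T0 Hm0).
      + apply (al_close sigma T mu0 T0 Hm0).
      + exact R'p.
      + exact M0p.
      + split. apply (var_nonneg sigma T mu0 T0). apply Vm; apply Hmub; auto.
      + split. apply (var_nonneg sigma T mu0 T0). apply Vm; apply Htb; auto.
      + intro E. unfold al_, s2a. rewrite E. split. apply (al0 sigma T mu0 Hm0). apply (var0_bound eps Heps); lra.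
      + intro E. unfold be_, s2b. rewrite E. split. apply (al0 sigma T mu0 Hm0). apply (var0_bound eps Heps); lra.
    - rewrite !rsum_plus, !rsum_scal, rsum_const, rsum_plus, !rsum_ind. fold Nm Nt Nq. lra. }
  eapply Rle_trans. apply Rplus_le_compat. exact Hbias. exact Hvar.
  rewrite M0e. unfold Rpower. fold (tau n). fold T.
  assert (p2 : 0 <= p^2) by apply pow2_ge_0.
  apply (final_ineq eps beta b T c0 cD cB c4 Nm Nt Nq Dv Bnd Bnd2); auto.
  - split. apply pos_INR. exact Hnm.
  - split. apply pos_INR. exact Hnt.
  - split. apply pos_INR. exact Hnq.
  - split. unfold Dv. assert (0 <= R'^2) by apply pow2_ge_0. assert (0 <= p^2 * R') by (apply Rmult_le_pos; lra). lra.
    fold p. apply (D_le sigma p T Hs T1 Tp).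
  - split. unfold Bnd. assert (0 <= (p^2 + R')^2) by apply pow2_ge_0. lra.
    fold p. apply (Bnd_le sigma p T Hs T1 Tp).
  - split. unfold Bnd2. assert (0 <= (p^2 + R')^2) by apply pow2_ge_0. assert (0 <= Vs^2) by apply pow2_ge_0.
    assert (0 <= Vs * (p^2 + R')^2) by (apply Rmult_le_pos; lra). lra.
    fold p. apply (Bnd2_le sigma p T Hs p1 T1 Tp).
Qed.
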